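(* Let $r>0$ and $m\ge0$ an integer. There are constants $C$ depending only on $r$ and $m$ such that: (a) For every $C^\infty$ function $f\colon[0,1]\to\mathbb{R}^d$, $\lVert f\rVert^2_{r-1,m}\le C(\lVert f\rVert^2_{r,m}+\lVert f\rVert^2_{r+1,m+1})$ and $\lvert f\rvert^2_{\infty;r,m}\le C(\lVert f\rVert^2_{r,m}+\lVert f\rVert^2_{r+1,m+1})$; and if moreover $f^{(m)}(1)=0$, then $\lVert f\rVert^2_{r-1,m}\le C\lVert f\rVert^2_{r+1,m+1}$ and $\lvert f\rvert^2_{\infty;r,m}\le C\lVert f\rVert^2_{r+1,m+1}$. (b) The same four inequalities hold, with the same constants for all $n\in\mathbb{N}$, for every sequence $f_1,\dots,f_n\in\mathbb{R}^d$, with the norms interpreted as discrete seminorms, where in the last two inequalities the hypothesis $f^{(m)}(1)=0$ is replaced by $(\nabla_+^mf)_{n-m}=0$.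
   Context: Continuous weighted seminorms: $\lVert f\rVert^2_{r,m}=\int_0^1s^r\lvert f^{(m)}(s)\rvert^2ds$ and $\lvert f\rvert^2_{\infty;r,m}=\sup_{0\le s\le1}s^r\lvert f^{(m)}(s)\rvert^2$. Discrete: for $n\in\mathbb{N}$, real $r>-1$ and $k\ge1$, $s_k^{(r)}=\frac{\Gamma(k+r)}{n^r\Gamma(k)}$; $(\nabla_+f)_k=n(f_{k+1}-f_k)$; $\lVert f\rVert^2_{r,m}=\frac1n\sum_{k=1}^{n-m}s_k^{(r)}\lvert(\nabla_+^mf)_k\rvert^2$ and $\lvert f\rvert^2_{\infty;r,m}=\max_{1\le k\le n-m}s_k^{(r)}\lvert(\nabla_+^mf)_k\rvert^2$. *)

(* Defs.v *)
From Stdlib Require Import Reals Lra Arith ClassicalEpsilon.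
From Stdlib Require Import Factorial.
Open Scope R_scope.

Fixpoint sum0 (d : nat) (g : nat -> R) : R :=
  match d with O => 0 | S d' => sum0 d' g + g d' end.
Fixpoint sum1 (N : nat) (g : nat -> R) : R :=
  match N with O => 0 | S N' => sum1 N' g + g N end.
(* max_{1<=k<=N} g k  for nonnegative g (0 if N = 0) *)
Fixpoint max1 (N : nat) (g : nat -> R) : R :=
  match N with O => 0 | S N' => Rmax (max1 N' g) (g N) end.
Fixpoint prod0 (N : nat) (g : nat -> R) : R :=
  match N with O => g O | S N' => prod0 N' g * g N end.

Definition vec := nat -> R.   (* components 0..d-1 are relevant *)
Definition sqnorm (d : nat) (v : vec) : R := sum0 d (fun i => (v i) ^ 2).

(* s^a for s > 0 (value 0 at s <= 0; only used with s in (0,1], or with a > 0 at s = 0) *)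
Definition rpow (s a : R) : R :=
  if Rlt_dec 0 s then Rpower s a else 0.

(* ---------- Gamma function (Euler's limit formula, x > 0) ---------- *)
Definition Gamma (x : R) : R :=
  epsilon (inhabits 0) (fun g =>
    Un_cv (fun N => INR (fact N) * Rpower (INR N) x / prod0 N (fun j => x + INR j)) g).

(* Riemann integral of g on [a,b] (value irrelevant if not integrable) *)
Definition Rint (g : R -> R) (a b : R) : R :=
  epsilon (inhabits 0) (fun I => exists pr : Riemann_integrable g a b, RiemannInt pr = I).
Definition Int01 (g : R -> R) : R :=
  epsilon (inhabits 0) (fun I => forall eps, 0 < eps -> exists delta, 0 < delta /\
     forall a, 0 < a < delta -> Rabs (Rint g a 1 - I) < eps).

Definition deriv01 (g : R -> R) (x l : R) : Prop :=
  forall eps, 0 < eps -> exists delta, 0 < delta /\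
    forall h, h <> 0 -> Rabs h < delta -> 0 <= x + h <= 1 ->
      Rabs ((g (x + h) - g x) / h - l) < eps.
(* F k is the k-th derivative of f = F 0; C^infinity on [0,1] *)
Definition smooth01 (d : nat) (F : nat -> R -> vec) : Prop :=
  forall (i k : nat) (x : R), (i < d)%nat -> 0 <= x <= 1 ->
    deriv01 (fun s => F k s i) x (F (S k) x i).

(* continuous seminorms: ||f||^2_{r,m} and |f|^2_{inf;r,m} *)
Definition cnorm2 (d : nat) (r : R) (m : nat) (F : nat -> R -> vec) : R :=
  Int01 (fun s => rpow s r * sqnorm d (F m s)).
Definition csup2 (d : nat) (r : R) (m : nat) (F : nat -> R -> vec) : R :=
  epsilon (inhabits 0) (fun M =>
    is_lub (fun y => exists s, 0 <= s <= 1 /\ y = rpow s r * sqnorm d (F m s)) M).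

Definition nablap (n : nat) (f : nat -> vec) : nat -> vec :=
  fun k i => INR n * (f (S k) i - f k i).
Fixpoint nablapow (n m : nat) (f : nat -> vec) : nat -> vec :=
  match m with O => f | S m' => nablap n (nablapow n m' f) end.
Definition sw (n : nat) (r : R) (k : nat) : R :=
  Gamma (INR k + r) / (Rpower (INR n) r * Gamma (INR k)).
Definition dnorm2 (d n : nat) (r : R) (m : nat) (f : nat -> vec) : R :=
  / INR n * sum1 (n - m) (fun k => sw n r k * sqnorm d (nablapow n m f k)).
Definition dsup2 (d n : nat) (r : R) (m : nat) (f : nat -> vec) : R :=
  max1 (n - m) (fun k => sw n r k * sqnorm d (nablapow n m f k)).

(* Main.v *)
Require Import Defs.
From Stdlib Require Import Reals.
Open Scope R_scope.

From Stdlib Require Import Reals Lra Lia Psatz ClassicalEpsilon.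
From Stdlib Require Import Factorial.
Open Scope R_scope.

Definition aN (x : R) (N : nat) : R :=
  INR (fact N) * Rpower (INR N) x / prod0 N (fun j => x + INR j).

Lemma prod0_S N g : prod0 (S N) g = prod0 N g * g (S N).
Proof. reflexivity. Qed.

Lemma prod0_pos x N : 0 < x -> 0 < prod0 N (fun j => x + INR j).
Proof.
  intros hx; induction N as [|N IH].
  - simpl; lra.
  - rewrite prod0_S. apply Rmult_lt_0_compat; auto. cbv beta. pose proof (pos_INR (S N)); lra.
Qed.

Lemma prod0_shift x N :
  prod0 N (fun j => x + 1 + INR j) * x = prod0 N (fun j => x + INR j) * (x + 1 + INR N).
Proof.
  induction N as [|N IH].
  - simpl; ring.
  - rewrite !prod0_S, S_INR. transitivity (prod0 N (fun j => x + 1 + INR j) * x * (x + 1 + (INR N + 1))); [ring|].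
    rewrite IH. ring.
Qed.

Lemma aN_shift x N : 0 < x -> (1 <= N)%nat ->
  aN (x + 1) N = aN x N * (x * INR N / (x + 1 + INR N)).
Proof.
  intros hx hN. unfold aN.
  assert (hNp : 0 < INR N) by (apply lt_0_INR; lia).
  rewrite Rpower_plus, Rpower_1 by lra.
  pose proof (prod0_pos x N hx). pose proof (prod0_pos (x+1) N ltac:(lra)).
  pose proof (prod0_shift x N).
  assert (0 < x + 1 + INR N) by lra.
  assert (h : prod0 N (fun j => x + 1 + INR j) = prod0 N (fun j => x + INR j) * (x + 1 + INR N) / x).
  { rewrite <- H1. field. lra. }
  rewrite h. field. repeat split; lra.
Qed.

Lemma ln_le_sub1 y : 0 < y -> ln y <= y - 1.
Proof. intros hy. pose proof (exp_ineq1_le (ln y)). rewrite exp_ln in H; lra. Qed.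

Lemma aN_growing x N : 0 < x -> (1 <= N)%nat -> aN x N <= aN x (S N).
Proof.
  intros hx hN. unfold aN.
  assert (hNp : 0 < INR N) by (apply lt_0_INR; lia).
  rewrite prod0_S, S_INR.
  change (fact (S N)) with (S N * fact N)%nat. rewrite mult_INR, S_INR.
  pose proof (prod0_pos x N hx) as hp.
  assert (hf : 0 < INR (fact N)) by (apply lt_0_INR; apply lt_O_fact).
  assert (key : Rpower (INR N) x * (x + (INR N + 1)) <= Rpower (INR N + 1) x * (INR N + 1)).
  { replace (INR N + 1) with (INR N * ((INR N + 1) / INR N)) at 2 by (field; lra).
    rewrite <- Rpower_mult_distr by (try apply Rdiv_lt_0_compat; lra).
    assert (hq : 1 + x / (INR N + 1) <= Rpower ((INR N + 1) / INR N) x).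
    { unfold Rpower. eapply Rle_trans; [|apply exp_ineq1_le].
      apply Rplus_le_compat_l.
      assert (hl : 1 / (INR N + 1) <= ln ((INR N + 1) / INR N)).
      { assert (h2 : ln (INR N / (INR N + 1)) <= INR N / (INR N + 1) - 1)
          by (apply ln_le_sub1; apply Rdiv_lt_0_compat; lra).
        replace ((INR N + 1) / INR N) with (/ (INR N / (INR N + 1))) by (field; lra).
        rewrite ln_Rinv by (apply Rdiv_lt_0_compat; lra).
        replace (INR N / (INR N + 1) - 1) with (- (1 / (INR N + 1))) in h2 by (field; lra).
        lra. }
      replace (x / (INR N + 1)) with (x * (1 / (INR N + 1))) by (field; lra).
      apply Rmult_le_compat_l; lra. }
    assert (hpw : 0 < Rpower (INR N) x) by (unfold Rpower; apply exp_pos).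
    replace (x + (INR N + 1)) with ((INR N + 1) * (1 + x / (INR N + 1))) by (field; lra).
    replace (Rpower (INR N) x * ((INR N + 1) * (1 + x / (INR N + 1)))) with
      ((Rpower (INR N) x * (INR N + 1)) * (1 + x / (INR N + 1))) by ring.
    replace (Rpower (INR N) x * Rpower ((INR N + 1) / INR N) x * (INR N + 1)) with
      ((Rpower (INR N) x * (INR N + 1)) * Rpower ((INR N + 1) / INR N) x) by ring.
    apply Rmult_le_compat_l; [|lra]. apply Rmult_le_pos; lra. }
  assert (0 < x + (INR N + 1)) by lra.
  unfold Rdiv. rewrite Rinv_mult.
  apply (Rmult_le_reg_r (prod0 N (fun j => x + INR j) * (x + (INR N + 1)) / INR (fact N))).
  { apply Rdiv_lt_0_compat; [apply Rmult_lt_0_compat|]; lra. }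
  field_simplify; try lra.
Qed.

Lemma bern y x : 1 <= y -> 0 < x <= 1 -> Rpower y x <= 1 + x * (y - 1).
Proof.
  intros hy hx. destruct (Req_dec y 1) as [e|ne].
  - subst. unfold Rpower. rewrite ln_1, Rmult_0_r, exp_0. lra.
  - destruct (MVT_cor2 (fun c => Rpower c x) (fun c => x * Rpower c (x - 1)) 1 y) as [c [hc1 hc2]].
    + lra.
    + intros c hc. apply derivable_pt_lim_power. lra.
    + assert (Rpower c (x - 1) <= 1).
      { apply Rle_trans with (Rpower c 0); [apply Rle_Rpower; lra| rewrite Rpower_O; lra]. }
      assert (Rpower 1 x = 1) by (unfold Rpower; rewrite ln_1, Rmult_0_r, exp_0; auto).
      assert (x * Rpower c (x - 1) * (y - 1) <= x * (y - 1)).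
      { replace (x * (y-1)) with (x * 1 * (y - 1)) by ring.
        apply Rmult_le_compat_r; [lra|]. apply Rmult_le_compat_l; lra. }
      lra.
Qed.

Lemma Rpower_pos a b : 0 < Rpower a b.
Proof. unfold Rpower. apply exp_pos. Qed.

Lemma prod0_lower x N : 0 < x <= 1 ->
  x * INR (fact N) * Rpower (INR N + 1) x <= prod0 N (fun j => x + INR j).
Proof.
  intros hx. induction N as [|N IH].
  - simpl. replace (0 + 1) with 1 by ring. unfold Rpower. rewrite ln_1, Rmult_0_r, exp_0. lra.
  - rewrite prod0_S. change (fact (S N)) with (S N * fact N)%nat. rewrite mult_INR, !S_INR.
    pose proof (pos_INR N).
    assert (hf : 0 < INR (fact N)) by (apply lt_0_INR; apply lt_O_fact).
    assert (hb : Rpower (INR N + 1 + 1) x <= Rpower (INR N + 1) x * (1 + x / (INR N + 1))).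
    { replace (INR N + 1 + 1) with ((INR N + 1) * ((INR N + 2) / (INR N + 1))) by (field; lra).
      rewrite <- Rpower_mult_distr by (try apply Rdiv_lt_0_compat; lra).
      apply Rmult_le_compat_l; [left; apply Rpower_pos|].
      eapply Rle_trans; [apply bern|]; try lra.
      - apply (Rmult_le_reg_r (INR N + 1)); [lra|]. field_simplify; lra.
      - right. field. lra. }
    cbv beta.
    apply Rle_trans with (x * INR (fact N) * Rpower (INR N + 1) x * (x + (INR N + 1))).
    2:{ apply Rmult_le_compat_r; [lra|]. exact IH. }
    assert (0 < x * INR (fact N)) by (apply Rmult_lt_0_compat; lra).
    replace (x * ((INR N + 1) * INR (fact N)) * Rpower (INR N + 1 + 1) x) with
      ((x * INR (fact N)) * ((INR N + 1) * Rpower (INR N + 1 + 1) x)) by ring.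
    replace (x * INR (fact N) * Rpower (INR N + 1) x * (x + (INR N + 1))) with
      ((x * INR (fact N)) * ((INR N + 1) * (Rpower (INR N + 1) x * (1 + x / (INR N + 1))))) by (field; lra).
    apply Rmult_le_compat_l; [lra|]. apply Rmult_le_compat_l; lra.
Qed.

Lemma aN_nonneg x N : 0 < x -> 0 <= aN x N.
Proof.
  intros hx. unfold aN. pose proof (prod0_pos x N hx).
  assert (0 < INR (fact N)) by (apply lt_0_INR; apply lt_O_fact).
  pose proof (Rpower_pos (INR N) x).
  apply Rlt_le, Rdiv_lt_0_compat; [apply Rmult_lt_0_compat|]; lra.
Qed.

Lemma aN_bound01 x N : 0 < x <= 1 -> (1 <= N)%nat -> aN x N <= / x.
Proof.
  intros hx hN. unfold aN. pose proof (prod0_pos x N ltac:(lra)).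
  pose proof (prod0_lower x N hx).
  assert (0 < INR (fact N)) by (apply lt_0_INR; apply lt_O_fact).
  assert (hNp : 0 < INR N) by (apply lt_0_INR; lia).
  assert (Rpower (INR N) x <= Rpower (INR N + 1) x) by (apply Rle_Rpower_l; lra).
  pose proof (Rpower_pos (INR N) x).
  apply (Rmult_le_reg_r (prod0 N (fun j => x + INR j))); [lra|].
  unfold Rdiv. rewrite Rmult_assoc, Rinv_l, Rmult_1_r by lra.
  apply (Rmult_le_reg_l x); [lra|].
  rewrite <- (Rmult_assoc x (/ x)), Rinv_r, Rmult_1_l by lra.
  eapply Rle_trans; [|exact H0].
  rewrite Rmult_assoc. apply Rmult_le_compat_l; [lra|].
  apply Rmult_le_compat_l; lra.
Qed.

Lemma aN_bounded x : 0 < x -> exists M, forall N, (1 <= N)%nat -> aN x N <= M.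
Proof.
  intros hx. destruct (INR_unbounded x) as [k hk].
  revert x hx hk. induction k as [|k IH]; intros x hx hk.
  - simpl in hk. lra.
  - destruct (Rle_dec x 1) as [h1|h1].
    + exists (/ x). intros N hN. apply aN_bound01; auto; lra.
    + destruct (IH (x - 1)) as [M hM]; [lra| rewrite S_INR in hk; lra|].
      exists ((x - 1) * M). intros N hN.
      replace x with (x - 1 + 1) at 1 by ring.
      rewrite aN_shift by (auto; lra).
      assert (hNp : 0 < INR N) by (apply lt_0_INR; lia).
      pose proof (aN_nonneg (x-1) N ltac:(lra)).
      assert (hq : (x - 1) * INR N / (x - 1 + 1 + INR N) <= x - 1).
      { apply (Rmult_le_reg_r (x - 1 + 1 + INR N)); [lra|].
        unfold Rdiv. rewrite Rmult_assoc, Rinv_l, Rmult_1_r by lra. nra. }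
      assert (0 <= (x - 1) * INR N / (x - 1 + 1 + INR N)) by (apply Rmult_le_pos; [nra| left; apply Rinv_0_lt_compat; lra]).
      specialize (hM N hN).
      rewrite Rmult_comm. apply Rmult_le_compat; lra.
Qed.

Lemma aN_gr x : 0 < x -> Un_growing (fun n => aN x (n + 1)).
Proof. intros hx n. replace (S n + 1)%nat with (S (n + 1)) by lia. apply aN_growing; [auto|lia]. Qed.

Lemma aN_cv x : 0 < x -> exists l, 0 < l /\ Un_cv (aN x) l.
Proof.
  intros hx. destruct (aN_bounded x hx) as [M hM].
  destruct (growing_cv (fun n => aN x (n + 1))) as [l hl].
  - apply aN_gr; auto.
  - exists M. intros y [n ->]. apply hM. lia.
  - exists l. split.
    + eapply Rlt_le_trans; [|apply (growing_ineq _ _ (aN_gr x hx) hl 0%nat)].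
      cbv beta. unfold aN. pose proof (prod0_pos x (0+1) hx).
      pose proof (Rpower_pos (INR (0+1)) x).
      assert (0 < INR (fact (0 + 1))) by (apply lt_0_INR; apply lt_O_fact).
      apply Rdiv_lt_0_compat; [apply Rmult_lt_0_compat|]; lra.
    + apply CV_shift with 1%nat. exact hl.
Qed.

Lemma Gamma_spec x l : Un_cv (aN x) l -> Gamma x = l.
Proof.
  intros h. unfold Gamma.
  apply (UL_sequence (aN x)); [|exact h].
  apply (epsilon_spec (inhabits 0) (fun g => Un_cv (aN x) g)). exists l; exact h.
Qed.

Lemma Gamma_pos x : 0 < x -> 0 < Gamma x.
Proof. intros hx. destruct (aN_cv x hx) as [l [hl hc]]. rewrite (Gamma_spec x l hc). exact hl. Qed.

Lemma cv_factor x : 0 < x -> Un_cv (fun n => x * INR (n + 1) / (x + 1 + INR (n + 1))) x.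
Proof.
  intros hx eps heps.
  destruct (INR_unbounded (x * (x + 1) / eps)) as [N hN].
  exists N. intros n hn. unfold Rdist.
  assert (hn' : INR N <= INR n) by (apply le_INR; lia).
  pose proof (pos_INR n). rewrite plus_INR. simpl (INR 1).
  replace (x * (INR n + 1) / (x + 1 + (INR n + 1)) - x) with (- (x * (x + 1) / (x + 1 + (INR n + 1)))) by (field; lra).
  rewrite Rabs_Ropp, Rabs_right.
  2:{ apply Rle_ge, Rmult_le_pos; [nra| left; apply Rinv_0_lt_compat; lra]. }
  apply (Rmult_lt_reg_r (x + 1 + (INR n + 1))); [lra|].
  unfold Rdiv. rewrite Rmult_assoc, Rinv_l, Rmult_1_r by lra.
  assert (x * (x + 1) < eps * INR N).
  { apply (Rmult_lt_reg_r (/ eps)); [apply Rinv_0_lt_compat; lra|].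
    replace (eps * INR N * / eps) with (INR N) by (field; lra). unfold Rdiv in hN. lra. }
  nra.
Qed.

Lemma Gamma_succ x : 0 < x -> Gamma (x + 1) = x * Gamma x.
Proof.
  intros hx. destruct (aN_cv x hx) as [l [hl hc]].
  rewrite (Gamma_spec x l hc). apply Gamma_spec.
  apply CV_shift with 1%nat.
  apply (Un_cv_ext (fun n => aN x (n + 1) * (x * INR (n + 1) / (x + 1 + INR (n + 1))))).
  - intros n. rewrite aN_shift by (auto; lia). reflexivity.
  - replace (x * l) with (l * x) by ring. apply CV_mult.
    + apply CV_shift'. exact hc.
    + apply cv_factor; auto.
Qed.

From Stdlib Require Import Reals Lra Lia Psatz.
Open Scope R_scope.

Fixpoint ss (a l : nat) (f : nat -> R) : R :=
  match l with O => 0 | S l' => ss a l' f + f (a + l')%nat end.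

Lemma ss_S a l f : ss a (S l) f = ss a l f + f (a + l)%nat.
Proof. reflexivity. Qed.

Lemma ss_ext a l f g : (forall i, (a <= i < a + l)%nat -> f i = g i) -> ss a l f = ss a l g.
Proof.
  induction l as [|l IH]; intros h; simpl; [reflexivity|].
  rewrite IH by (intros; apply h; lia). rewrite h by lia. reflexivity.
Qed.

Lemma ss_le a l f g : (forall i, (a <= i < a + l)%nat -> f i <= g i) -> ss a l f <= ss a l g.
Proof.
  induction l as [|l IH]; intros h; simpl; [lra|].
  apply Rplus_le_compat; [apply IH; intros; apply h; lia| apply h; lia].
Qed.

Lemma ss_nonneg a l f : (forall i, (a <= i < a + l)%nat -> 0 <= f i) -> 0 <= ss a l f.
Proof.
  intros h. replace 0 with (ss a l (fun _ => 0)).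
  - apply ss_le. auto.
  - induction l; simpl; [auto| rewrite IHl; [ring|intros; apply h; lia]].
Qed.

Lemma ss_plus a l f g : ss a l (fun i => f i + g i) = ss a l f + ss a l g.
Proof. induction l; simpl; [ring| rewrite IHl; ring]. Qed.

Lemma ss_scal a l c f : ss a l (fun i => c * f i) = c * ss a l f.
Proof. induction l; simpl; [ring| rewrite IHl; ring]. Qed.

Lemma ss_const a l c : ss a l (fun _ => c) = INR l * c.
Proof. induction l; simpl ss; [simpl; ring| rewrite IHl, S_INR; ring]. Qed.

Lemma ss_split a l1 l2 f : ss a (l1 + l2) f = ss a l1 f + ss (a + l1) l2 f.
Proof.
  induction l2 as [|l2 IH]; simpl.
  - rewrite Nat.add_0_r; ring.
  - rewrite Nat.add_succ_r. simpl. rewrite IH. replace (a + l1 + l2)%nat with (a + (l1 + l2))%nat by lia. ring.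
Qed.

Lemma ss_shift a l f : ss (S a) l f = ss a l (fun i => f (S i)).
Proof. induction l; simpl; [auto| rewrite IHl; replace (S a + l)%nat with (S (a + l)) by lia; auto]. Qed.

Lemma ss_single_le a l f j : (forall i, (a <= i < a + l)%nat -> 0 <= f i) -> (a <= j < a + l)%nat ->
  f j <= ss a l f.
Proof.
  induction l as [|l IH]; intros h hj; [lia|]. simpl.
  destruct (Nat.eq_dec j (a + l)) as [->|ne].
  - pose proof (ss_nonneg a l f ltac:(intros; apply h; lia)). lra.
  - pose proof (h (a + l)%nat ltac:(lia)). pose proof (IH ltac:(intros; apply h; lia) ltac:(lia)). lra.
Qed.

Lemma sum1_ss N g : sum1 N g = ss 1 N g.
Proof. induction N; simpl; [auto| rewrite IHN; replace (S N) with (1 + N)%nat by lia; auto]. Qed.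

Lemma ss_telescope a l u : ss a l (fun i => u (S i) - u i) = u (a + l)%nat - u a.
Proof.
  induction l as [|l IH]; simpl ss.
  - rewrite Nat.add_0_r; ring.
  - rewrite IH. replace (S (a + l)) with (a + S l)%nat by lia. ring.
Qed.

Lemma ss_abs a l f : Rabs (ss a l f) <= ss a l (fun i => Rabs (f i)).
Proof.
  induction l; simpl; [rewrite Rabs_R0; lra|].
  eapply Rle_trans; [apply Rabs_triang|]. lra.
Qed.

Lemma ss_cs a l u w : (forall i, (a <= i < a + l)%nat -> 0 < w i) ->
  (ss a l u) ^ 2 <= ss a l (fun i => / w i) * ss a l (fun i => w i * u i ^ 2).
Proof.
  induction l as [|l IH]; intros hw; [simpl; lra|]. rewrite !ss_S.
  set (S0 := ss a l u). set (P := ss a l (fun i => / w i)). set (Q := ss a l (fun i => w i * u i ^ 2)).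
  assert (h1 : S0 ^ 2 <= P * Q) by (apply IH; intros; apply hw; lia).
  assert (hP : 0 <= P) by (apply ss_nonneg; intros; left; apply Rinv_0_lt_compat, hw; lia).
  assert (hQ : 0 <= Q) by (apply ss_nonneg; intros; apply Rmult_le_pos; [left; apply hw; lia| nra]).
  set (W := w (a + l)%nat). set (U := u (a + l)%nat).
  assert (hW : 0 < W) by (apply hw; lia).
  assert (X : 2 * S0 * U <= P * W * U ^ 2 + Q / W).
  { set (Y := P * W * U ^ 2 + Q / W).
    assert (hY : 0 <= Y).
    { unfold Y. apply Rplus_le_le_0_compat; [apply Rmult_le_pos; [apply Rmult_le_pos|]; nra| apply Rmult_le_pos; [lra| left; apply Rinv_0_lt_compat; lra]]. }
    assert (hY2 : 4 * P * Q * U ^ 2 <= Y ^ 2).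
    { unfold Y. replace ((P * W * U ^ 2 + Q / W) ^ 2) with ((P * W * U ^ 2 - Q / W) ^ 2 + 4 * P * Q * U ^ 2) by (field; lra).
      pose proof (pow2_ge_0 (P * W * U ^ 2 - Q / W)); lra. }
    destruct (Rle_dec (2 * S0 * U) 0); [lra|].
    apply Rsqr_incr_0_var; [|lra]. unfold Rsqr. nra. }
  replace ((S0 + U) ^ 2) with (S0 ^ 2 + 2 * S0 * U + U ^ 2) by ring.
  replace ((P + / W) * (Q + W * U ^ 2)) with (P * Q + (P * W * U ^ 2 + Q / W) + U ^ 2) by (field; lra).
  lra.
Qed.

From Stdlib Require Import Reals Lra Lia Psatz.
Open Scope R_scope.

Definition Bgood (r : R) (B : nat -> R) :=
  (forall k, (1 <= k)%nat -> 0 < B k) /\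
  (forall k, (1 <= k)%nat -> B (S k) = B k * (INR k + r) / INR k).

Lemma INR_ge1 k : (1 <= k)%nat -> 1 <= INR k.
Proof. intros h. apply (le_INR 1 k) in h. simpl in h. exact h. Qed.

Lemma B_step r B k : 0 < r -> Bgood r B -> (1 <= k)%nat -> B k <= B (S k).
Proof.
  intros hr [hp hs] hk. rewrite hs by auto. pose proof (hp k hk). pose proof (INR_ge1 k hk).
  apply (Rmult_le_reg_r (INR k)); [lra|]. unfold Rdiv. rewrite Rmult_assoc, Rinv_l, Rmult_1_r by lra. nra.
Qed.

Lemma B_mono r B k j : 0 < r -> Bgood r B -> (1 <= k <= j)%nat -> B k <= B j.
Proof.
  intros hr hB hkj. induction j as [|j IH]; [lia|].
  destruct (Nat.eq_dec k (S j)) as [->|ne]; [lra|].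
  eapply Rle_trans; [apply IH; lia| apply (B_step r); auto; lia].
Qed.

Lemma B_pow r B p k j : 0 < r -> Bgood r B -> r <= INR p -> (1 <= k <= j)%nat ->
  B j * INR k ^ p <= B k * INR j ^ p.
Proof.
  intros hr [hp hs] hrp hkj. induction j as [|j IH]; [lia|].
  destruct (Nat.eq_dec k (S j)) as [->|ne]; [lra|].
  assert (IH' := IH ltac:(lia)).
  assert (hj : 1 <= INR j) by (apply INR_ge1; lia).
  rewrite hs by lia. rewrite S_INR.
  assert (hb : INR j ^ p * (INR j + r) <= INR j * (INR j + 1) ^ p).
  { replace (INR j + 1) with (INR j * (1 + / INR j)) by (field; lra).
    rewrite Rpow_mult_distr.
    pose proof (poly p (/ INR j) ltac:(apply Rinv_0_lt_compat; lra)).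
    assert (INR j + r <= INR j * (1 + INR p * / INR j)).
    { replace (INR j * (1 + INR p * / INR j)) with (INR j + INR p) by (field; lra). lra. }
    assert (0 < INR j ^ p) by (apply pow_lt; lra).
    replace (INR j * (INR j ^ p * (1 + / INR j) ^ p)) with (INR j ^ p * (INR j * (1 + / INR j) ^ p)) by ring.
    apply Rmult_le_compat_l; [lra|]. nra. }
  pose proof (hp j ltac:(lia)). pose proof (hp k ltac:(lia)).
  assert (0 < INR k ^ p) by (apply pow_lt; apply lt_0_INR; lia).
  apply (Rmult_le_reg_r (INR j ^ p * INR j)); [apply Rmult_lt_0_compat; [apply pow_lt|]; lra|].
  replace (B j * (INR j + r) / INR j * INR k ^ p * (INR j ^ p * INR j)) with
    ((B j * INR k ^ p) * (INR j ^ p * (INR j + r))) by (field; lra).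
  replace (B k * (INR j + 1) ^ p * (INR j ^ p * INR j)) with
    ((B k * INR j ^ p) * (INR j * (INR j + 1) ^ p)) by ring.
  apply Rmult_le_compat; try lra.
  - apply Rmult_le_pos; lra.
  - apply Rmult_le_pos; [apply pow_le|]; lra.
Qed.

Lemma tele_eq r B k l : 0 < r -> Bgood r B -> (1 <= k)%nat ->
  ss k l (fun i => / (B i * (INR i + r))) = (/ B k - / B (k + l)%nat) / r.
Proof.
  intros hr [hp hs] hk. induction l as [|l IH].
  - simpl. rewrite Nat.add_0_r. field. pose proof (hp k hk); split; lra.
  - rewrite ss_S, IH. replace (k + S l)%nat with (S (k + l)) by lia.
    rewrite hs by lia. pose proof (hp (k + l)%nat ltac:(lia)). pose proof (hp k hk).
    assert (1 <= INR (k + l)) by (apply INR_ge1; lia).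
    field. repeat split; lra.
Qed.

Lemma tele_le r B k l : 0 < r -> Bgood r B -> (1 <= k)%nat ->
  ss k l (fun i => / (B i * (INR i + r))) <= / (r * B k).
Proof.
  intros hr hB hk. rewrite tele_eq by auto. destruct hB as [hp hs].
  pose proof (hp k hk). pose proof (hp (k + l)%nat ltac:(lia)).
  assert (0 < / B (k + l)%nat) by (apply Rinv_0_lt_compat; lra).
  rewrite Rinv_mult. unfold Rdiv. rewrite Rmult_comm. apply Rmult_le_compat_l.
  - left; apply Rinv_0_lt_compat; lra.
  - lra.
Qed.

Definition Een (r : R) (B : nat -> R) (N : nat) (g : nat -> R) :=
  ss 1 (N - 1) (fun i => B i * (INR i + r) * (g (S i) - g i) ^ 2).
Definition SBn (B : nat -> R) (N : nat) (g : nat -> R) :=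
  ss 1 N (fun k => B k * g k ^ 2).

Lemma Een_nonneg r B N g : 0 < r -> Bgood r B -> 0 <= Een r B N g.
Proof.
  intros hr [hp hs]. unfold Een. apply ss_nonneg. intros i hi.
  pose proof (hp i ltac:(lia)). pose proof (pos_INR i).
  apply Rmult_le_pos; [apply Rmult_le_pos|]; first [lra | apply pow2_ge_0].
Qed.

Lemma SBn_nonneg r B N g : Bgood r B -> 0 <= SBn B N g.
Proof.
  intros [hp hs]. unfold SBn. apply ss_nonneg. intros i hi. pose proof (hp i ltac:(lia)).
  apply Rmult_le_pos; first [lra | apply pow2_ge_0].
Qed.

Lemma diff_bound r B N g lo hi : 0 < r -> Bgood r B -> (1 <= lo <= hi)%nat -> (hi <= N)%nat ->
  (g hi - g lo) ^ 2 <= / (r * B lo) * Een r B N g.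
Proof.
  intros hr hB hlh hN. destruct hB as [hp hs] eqn:eB.
  assert (ht : g hi - g lo = ss lo (hi - lo) (fun i => g (S i) - g i)).
  { rewrite (ss_telescope lo (hi - lo) g). replace (lo + (hi - lo))%nat with hi by lia. auto. }
  rewrite ht.
  eapply Rle_trans; [apply (ss_cs lo (hi - lo) _ (fun i => B i * (INR i + r)))|].
  { intros i hi'. pose proof (hp i ltac:(lia)). pose proof (pos_INR i). apply Rmult_lt_0_compat; lra. }
  apply Rmult_le_compat.
  - apply ss_nonneg. intros i hi'. pose proof (hp i ltac:(lia)). pose proof (pos_INR i).
    left; apply Rinv_0_lt_compat, Rmult_lt_0_compat; lra.
  - apply ss_nonneg. intros i hi'. pose proof (hp i ltac:(lia)). pose proof (pos_INR i).
    apply Rmult_le_pos; [apply Rmult_le_pos|]; first [lra | apply pow2_ge_0].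
  - apply tele_le; auto. lia.
  - unfold Een.
    replace (N - 1)%nat with ((lo - 1) + (hi - lo) + (N - hi))%nat by lia.
    rewrite !ss_split. replace (1 + (lo - 1))%nat with lo by lia.
    assert (0 <= ss 1 (lo - 1) (fun i => B i * (INR i + r) * (g (S i) - g i) ^ 2)).
    { apply ss_nonneg. intros i hi'. pose proof (hp i ltac:(lia)). pose proof (pos_INR i).
      apply Rmult_le_pos; [apply Rmult_le_pos|]; first [lra | apply pow2_ge_0]. }
    assert (0 <= ss (1 + (lo - 1 + (hi - lo))) (N - hi) (fun i => B i * (INR i + r) * (g (S i) - g i) ^ 2)).
    { apply ss_nonneg. intros i hi'. pose proof (hp i ltac:(lia)). pose proof (pos_INR i).
      apply Rmult_le_pos; [apply Rmult_le_pos|]; first [lra | apply pow2_ge_0]. }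
    lra.
Qed.

Lemma sup_BC r B N g k : 0 < r -> Bgood r B -> g N = 0 -> (1 <= k <= N)%nat ->
  B k * g k ^ 2 <= / r * Een r B N g.
Proof.
  intros hr hB hg hk.
  pose proof (diff_bound r B N g k N hr hB ltac:(lia) ltac:(lia)) as h.
  rewrite hg in h. replace ((0 - g k) ^ 2) with (g k ^ 2) in h by ring.
  destruct hB as [hp hs]. pose proof (hp k ltac:(lia)).
  apply (Rmult_le_compat_l (B k)) in h; [|lra].
  eapply Rle_trans; [exact h|]. right. field. lra.
Qed.

From Stdlib Require Import Reals Lra Lia Psatz Arith.
Open Scope R_scope.

Lemma half_facts N : (2 * (N / 2) <= N <= 2 * (N / 2) + 1)%nat.
Proof.
  pose proof (Nat.div_mod_eq N 2). pose proof (Nat.mod_upper_bound N 2 ltac:(lia)). lia.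
Qed.

Lemma ratio_bound r B p N k j : 0 < r -> Bgood r B -> r <= INR p ->
  (1 <= k <= N)%nat -> (1 <= j)%nat -> (k <= 2 * j)%nat -> B k <= 2 ^ p * B j.
Proof.
  intros hr hB hrp hk hj hkj.
  assert (h2 : 1 <= 2 ^ p) by (apply pow_R1_Rle; lra).
  destruct hB as [hp hs] eqn:eB.
  destruct (le_lt_dec k j) as [hle|hlt].
  - pose proof (B_mono r B k j hr hB ltac:(lia)). pose proof (hp j hj). nra.
  - pose proof (B_pow r B p j k hr hB hrp ltac:(lia)) as hpw.
    assert (hjp : 0 < INR j ^ p) by (apply pow_lt, lt_0_INR; lia).
    assert (hk2 : INR k ^ p <= 2 ^ p * INR j ^ p).
    { rewrite <- Rpow_mult_distr. apply pow_incr. split; [apply pos_INR|].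
      apply le_INR in hkj. rewrite mult_INR in hkj. replace (INR 2) with 2 in hkj by (simpl; ring). lra. }
    pose proof (hp j hj). pose proof (hp k ltac:(lia)).
    apply (Rmult_le_reg_r (INR j ^ p)); [lra|]. nra.
Qed.

Lemma sup_gen r B p N g k : 0 < r -> Bgood r B -> r <= INR p -> (1 <= k <= N)%nat ->
  B k * g k ^ 2 <= 2 ^ (S p) * (2 * SBn B N g / INR N + / r * Een r B N g).
Proof.
  intros hr hB hrp hk.
  pose proof (half_facts N) as hf. set (q := (N / 2)%nat) in *.
  set (h := (N - q)%nat). set (L := S q).
  destruct hB as [hp hs] eqn:eB.
  set (E := Een r B N g). pose proof (Een_nonneg r B N g hr hB) as hE. fold E in hE.
  assert (h2 : 1 <= 2 ^ p) by (apply pow_R1_Rle; lra).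
  assert (hpt : forall j, (h <= j <= N)%nat ->
     B k * g k ^ 2 <= 2 ^ (S p) * (B j * g j ^ 2 + / r * E)).
  { intros j hj.
    assert (hjk : (k <= 2 * j)%nat) by lia.
    assert (hrat : B k <= 2 ^ p * B j) by (apply (ratio_bound r B p N); auto; lia).
    set (lo := Nat.min j k). set (hi := Nat.max j k).
    assert (hd : (g k - g j) ^ 2 <= / (r * B lo) * E).
    { replace ((g k - g j) ^ 2) with ((g hi - g lo) ^ 2).
      - apply diff_bound; auto; unfold lo, hi; lia.
      - unfold lo, hi. destruct (le_lt_dec j k).
        + rewrite Nat.min_l, Nat.max_r by lia. auto.
        + rewrite Nat.min_r, Nat.max_l by lia. ring. }
    assert (hrat2 : B k <= 2 ^ p * B lo).
    { unfold lo. destruct (le_lt_dec j k).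
      - rewrite Nat.min_l by lia. exact hrat.
      - rewrite Nat.min_r by lia. pose proof (hp k ltac:(lia)). nra. }
    pose proof (hp lo ltac:(unfold lo; lia)). pose proof (hp k ltac:(lia)). pose proof (hp j ltac:(lia)).
    assert (hsq : g k ^ 2 <= 2 * g j ^ 2 + 2 * (g k - g j) ^ 2) .
    { pose proof (pow2_ge_0 (g k - 2 * g j)).
      replace (2 * g j ^ 2 + 2 * (g k - g j) ^ 2) with (g k ^ 2 + (g k - 2 * g j) ^ 2) by ring. lra. }
    assert (hA : B k * (/ (r * B lo) * E) <= 2 ^ p * (/ r * E)).
    { rewrite Rinv_mult. replace (B k * (/ r * / B lo * E)) with ((B k / B lo) * (/ r * E)) by (field; lra).
      apply Rmult_le_compat_r; [apply Rmult_le_pos; [left; apply Rinv_0_lt_compat|]; lra|].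
      apply (Rmult_le_reg_r (B lo)); [lra|]. unfold Rdiv. rewrite Rmult_assoc, Rinv_l, Rmult_1_r by lra. lra. }
    assert (hB2 : B k * g j ^ 2 <= 2 ^ p * (B j * g j ^ 2)).
    { rewrite <- Rmult_assoc. apply Rmult_le_compat_r; [apply pow2_ge_0| lra]. }
    assert (hC : B k * g k ^ 2 <= 2 * (B k * g j ^ 2) + 2 * (B k * (g k - g j) ^ 2)).
    { apply (Rmult_le_compat_l (B k)) in hsq; lra. }
    assert (hD : B k * (g k - g j) ^ 2 <= B k * (/ (r * B lo) * E)) by (apply Rmult_le_compat_l; lra).
    simpl pow. lra. }
  assert (hsum : INR L * (B k * g k ^ 2) <= 2 ^ (S p) * (SBn B N g + INR L * (/ r * E))).
  { rewrite <- ss_const with (a := h).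
    eapply Rle_trans; [apply (ss_le h L _ (fun j => 2 ^ S p * (B j * g j ^ 2 + / r * E))); intros j hj; apply hpt; unfold h, L in *; lia|].
    rewrite ss_scal, ss_plus, ss_const.
    apply Rmult_le_compat_l; [apply pow_le; lra|].
    apply Rplus_le_compat_r.
    unfold SBn. replace (ss 1 N (fun k0 => B k0 * g k0 ^ 2)) with (ss 1 ((h - 1) + L) (fun k0 => B k0 * g k0 ^ 2)) by (f_equal; unfold h, L; lia).
    rewrite ss_split. replace (1 + (h - 1))%nat with h by (unfold h; lia).
    assert (0 <= ss 1 (h - 1) (fun k0 => B k0 * g k0 ^ 2)).
    { apply ss_nonneg. intros i hi. pose proof (hp i ltac:(lia)). apply Rmult_le_pos; [lra| apply pow2_ge_0]. }
    lra. }
  assert (hL : 0 < INR L) by (apply lt_0_INR; unfold L; lia).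
  assert (hN : INR N <= 2 * INR L).
  { assert (hNL : (N <= 2 * L)%nat) by (unfold L; lia). apply le_INR in hNL. rewrite mult_INR in hNL. replace (INR 2) with 2 in hNL by (simpl; ring). lra. }
  assert (hN0 : 0 < INR N) by (apply lt_0_INR; lia).
  pose proof (SBn_nonneg r B N g hB) as hSB.
  apply (Rmult_le_reg_l (INR L)); [lra|]. eapply Rle_trans; [exact hsum|].
  assert (SBn B N g <= INR L * (2 * SBn B N g / INR N)).
  { apply (Rmult_le_reg_r (INR N)); [lra|].
    replace (INR L * (2 * SBn B N g / INR N) * INR N) with (2 * INR L * SBn B N g) by (field; lra). nra. }
  assert (0 < 2 ^ S p) by (apply pow_lt; lra).
  nra.
Qed.

From Stdlib Require Import Reals Lra Lia Psatz Arith.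
Open Scope R_scope.

Lemma amgm X u v b : 0 < b -> X * u * v <= b / 4 * v ^ 2 + X ^ 2 / b * u ^ 2.
Proof.
  intros hb. apply (Rmult_le_reg_l b); [lra|].
  replace (b * (b / 4 * v ^ 2 + X ^ 2 / b * u ^ 2)) with (b * (X * u * v) + (b * v / 2 - X * u) ^ 2) by (field; lra).
  pose proof (pow2_ge_0 (b * v / 2 - X * u)). lra.
Qed.

Lemma abel_id B x N : (1 <= N)%nat ->
  ss 1 N (fun k => (B (S k) - B k) * x k) + ss 1 (N - 1) (fun k => B (S k) * (x (S k) - x k))
  = B (S N) * x N - B 1%nat * x 1%nat.
Proof.
  intros hN. destruct N as [|M]; [lia|]. clear hN.
  induction M as [|M IH].
  - simpl. ring.
  - rewrite (ss_S 1 (S M) (fun k => (B (S k) - B k) * x k)). replace (S (S M) - 1)%nat with (S M) by lia.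
    rewrite (ss_S 1 M (fun k => B (S k) * (x (S k) - x k))).
    replace (S M - 1)%nat with M in IH by lia.
    replace (1 + S M)%nat with (S (S M)) by lia. replace (1 + M)%nat with (S M) by lia.
    lra.
Qed.

Lemma cross_bound r B g k : 0 < r -> Bgood r B -> (1 <= k)%nat ->
  - (B (S k) * (g (S k) ^ 2 - g k ^ 2)) <=
  / 4 * (r * B k / INR k * g k ^ 2) + / 4 * (r * B (S k) / INR (S k) * g (S k) ^ 2)
  + (3 + r) / r * (B k * (INR k + r) * (g (S k) - g k) ^ 2).
Proof.
  intros hr [hp hs] hk.
  pose proof (hp k hk) as hb. pose proof (INR_ge1 k hk) as hK.
  set (b := B k) in *. set (K := INR k) in *. set (a := g k). set (c := g (S k)).
  rewrite S_INR. fold K. rewrite hs by auto. fold b K.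
  set (X := b * (K + r) / K).
  assert (hX : 0 < X) by (unfold X; apply Rdiv_lt_0_compat; [apply Rmult_lt_0_compat|]; lra).
  assert (e1 : - (X * (c ^ 2 - a ^ 2)) = X * (a - c) * a + X * (a - c) * c) by ring.
  rewrite e1.
  assert (hb1 : 0 < r * b / K) by (apply Rdiv_lt_0_compat; [apply Rmult_lt_0_compat|]; lra).
  assert (hb2 : 0 < r * X / (K + 1)) by (apply Rdiv_lt_0_compat; [apply Rmult_lt_0_compat|]; lra).
  pose proof (amgm X (a - c) a (r * b / K) hb1) as h1.
  pose proof (amgm X (a - c) c (r * X / (K + 1)) hb2) as h2.
  assert (q1 : X ^ 2 / (r * b / K) <= (1 + r) / r * (b * (K + r))).
  { unfold X. replace ((b * (K + r) / K) ^ 2 / (r * b / K)) with ((b * (K + r) / r) * ((K + r) / K)) by (field; lra).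
    replace ((1 + r) / r * (b * (K + r))) with ((b * (K + r) / r) * (1 + r)) by (field; lra).
    apply Rmult_le_compat_l; [left; apply Rdiv_lt_0_compat; [apply Rmult_lt_0_compat|]; lra|].
    apply (Rmult_le_reg_r K); [lra|]. unfold Rdiv. rewrite Rmult_assoc, Rinv_l, Rmult_1_r by lra. nra. }
  assert (q2 : X ^ 2 / (r * X / (K + 1)) <= 2 / r * (b * (K + r))).
  { replace (X ^ 2 / (r * X / (K + 1))) with (X * (K + 1) / r) by (field; lra).
    unfold X. replace (b * (K + r) / K * (K + 1) / r) with ((b * (K + r) / r) * ((K + 1) / K)) by (field; lra).
    replace (2 / r * (b * (K + r))) with ((b * (K + r) / r) * 2) by (field; lra).
    apply Rmult_le_compat_l; [left; apply Rdiv_lt_0_compat; [apply Rmult_lt_0_compat|]; lra|].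
    apply (Rmult_le_reg_r K); [lra|]. unfold Rdiv. rewrite Rmult_assoc, Rinv_l, Rmult_1_r by lra. lra. }
  assert (hd : 0 <= (a - c) ^ 2) by apply pow2_ge_0.
  replace ((c - a) ^ 2) with ((a - c) ^ 2) by ring.
  assert (hq1 : X ^ 2 / (r * b / K) * (a - c) ^ 2 <= (1 + r) / r * (b * (K + r)) * (a - c) ^ 2)
    by (apply Rmult_le_compat_r; auto).
  assert (hq2 : X ^ 2 / (r * X / (K + 1)) * (a - c) ^ 2 <= 2 / r * (b * (K + r)) * (a - c) ^ 2)
    by (apply Rmult_le_compat_r; auto).
  assert (e3 : (3 + r) / r * (b * (K + r) * (a - c) ^ 2) = (1 + r) / r * (b * (K + r)) * (a - c) ^ 2 + 2 / r * (b * (K + r)) * (a - c) ^ 2) by (field; lra).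
  rewrite e3.
  unfold Rdiv in *. lra.
Qed.

Definition Sbeta (r : R) (B : nat -> R) (N : nat) (g : nat -> R) :=
  ss 1 N (fun k => r * B k / INR k * g k ^ 2).

Lemma Sbeta_nonneg r B g : 0 < r -> Bgood r B -> forall a l, (1 <= a)%nat ->
  0 <= ss a l (fun k => r * B k / INR k * g k ^ 2).
Proof.
  intros hr [hp hs] a l ha. apply ss_nonneg. intros i hi.
  pose proof (hp i ltac:(lia)). pose proof (INR_ge1 i ltac:(lia)).
  apply Rmult_le_pos; [left; apply Rdiv_lt_0_compat; [apply Rmult_lt_0_compat|]; lra| apply pow2_ge_0].
Qed.

Lemma abel_bound r B N g : 0 < r -> Bgood r B -> (1 <= N)%nat ->
  Sbeta r B N g <= 2 * (1 + r) * (B N * g N ^ 2) + 2 * (3 + r) / r * Een r B N g.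
Proof.
  intros hr hB hN. pose proof hB as [hp hs].
  pose proof (abel_id B (fun k => g k ^ 2) N hN) as hid.
  assert (e1 : ss 1 N (fun k => (B (S k) - B k) * g k ^ 2) = Sbeta r B N g).
  { unfold Sbeta. apply ss_ext. intros i hi. rewrite hs by lia.
    pose proof (INR_ge1 i ltac:(lia)). field. lra. }
  cbv beta in hid. rewrite e1 in hid.
  set (T := ss 1 (N - 1) (fun k => B (S k) * (g (S k) ^ 2 - g k ^ 2))) in hid.
  set (S0 := Sbeta r B N g) in *.
  set (E := Een r B N g).
  assert (hT : - T <= / 4 * S0 + / 4 * S0 + (3 + r) / r * E).
  { assert (eT : - T = ss 1 (N - 1) (fun k => - (B (S k) * (g (S k) ^ 2 - g k ^ 2)))).
    { unfold T. replace (- ss 1 (N - 1) (fun k => B (S k) * (g (S k) ^ 2 - g k ^ 2))) with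
        (-1 * ss 1 (N - 1) (fun k => B (S k) * (g (S k) ^ 2 - g k ^ 2))) by ring.
      rewrite <- (ss_scal 1 (N - 1) (-1)). apply ss_ext. intros. ring. }
    rewrite eT.
    eapply Rle_trans.
    { apply (ss_le 1 (N - 1) _ (fun k => / 4 * (r * B k / INR k * g k ^ 2) + / 4 * (r * B (S k) / INR (S k) * g (S k) ^ 2)
            + (3 + r) / r * (B k * (INR k + r) * (g (S k) - g k) ^ 2))).
      intros i hi. apply cross_bound; auto; lia. }
    rewrite !ss_plus, !ss_scal.
    assert (a1 : ss 1 (N - 1) (fun k => r * B k / INR k * g k ^ 2) <= S0).
    { unfold S0, Sbeta. replace (ss 1 N (fun k => r * B k / INR k * g k ^ 2)) with (ss 1 ((N - 1) + 1) (fun k => r * B k / INR k * g k ^ 2)) by (f_equal; lia).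
      rewrite ss_split. pose proof (Sbeta_nonneg r B g hr hB (1 + (N - 1)) 1 ltac:(lia)). lra. }
    assert (a2 : ss 1 (N - 1) (fun k => r * B (S k) / INR (S k) * g (S k) ^ 2) <= S0).
    { rewrite <- (ss_shift 1 (N - 1) (fun k => r * B k / INR k * g k ^ 2)).
      unfold S0, Sbeta. replace (ss 1 N (fun k => r * B k / INR k * g k ^ 2)) with (ss 1 (1 + (N - 1)) (fun k => r * B k / INR k * g k ^ 2)) by (f_equal; lia).
      rewrite ss_split. pose proof (Sbeta_nonneg r B g hr hB 1 1 ltac:(lia)). simpl (1 + 1)%nat. lra. }
    unfold E, Een. lra. }
  assert (hl : B (S N) * g N ^ 2 <= (1 + r) * (B N * g N ^ 2)).
  { rewrite hs by auto. pose proof (hp N hN). pose proof (INR_ge1 N hN).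
    pose proof (pow2_ge_0 (g N)).
    replace (B N * (INR N + r) / INR N * g N ^ 2) with ((B N * g N ^ 2) * ((INR N + r) / INR N)) by (field; lra).
    rewrite (Rmult_comm (1 + r)). apply Rmult_le_compat_l; [apply Rmult_le_pos; lra|].
    apply (Rmult_le_reg_r (INR N)); [lra|]. unfold Rdiv. rewrite Rmult_assoc, Rinv_l, Rmult_1_r by lra. nra. }
  assert (h1 : 0 <= B 1%nat * g 1%nat ^ 2) by (apply Rmult_le_pos; [left; apply hp; lia| apply pow2_ge_0]).
  assert (e2 : 2 * (3 + r) / r * E = 2 * ((3 + r) / r * E)) by (field; lra).
  rewrite e2. lra.
Qed.

Lemma SA_bound r B N g : 0 < r -> Bgood r B ->
  ss 1 N (fun k => B k / (INR k + r - 1) * g k ^ 2) <= / (r * Rmin 1 r) * Sbeta r B N g.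
Proof.
  intros hr [hp hs].
  assert (hm : 0 < Rmin 1 r) by (apply Rmin_glb_lt; lra).
  unfold Sbeta. rewrite <- ss_scal. apply ss_le. intros i hi.
  pose proof (hp i ltac:(lia)). pose proof (INR_ge1 i ltac:(lia)).
  assert (hk : Rmin 1 r * INR i <= INR i + r - 1).
  { unfold Rmin. destruct (Rle_dec 1 r); nra. }
  rewrite <- Rmult_assoc. apply Rmult_le_compat_r; [apply pow2_ge_0|].
  replace (/ (r * Rmin 1 r) * (r * B i / INR i)) with (B i / (Rmin 1 r * INR i)) by (field; repeat split; lra).
  unfold Rdiv. apply Rmult_le_compat_l; [lra|].
  apply Rinv_le_contravar; [apply Rmult_lt_0_compat|]; lra.
Qed.

From Stdlib Require Import Reals Lra Lia Psatz Arith.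
Open Scope R_scope.

Lemma sum0_plus d f g : sum0 d (fun i => f i + g i) = sum0 d f + sum0 d g.
Proof. induction d; simpl; [ring| rewrite IHd; ring]. Qed.
Lemma sum0_scal d c f : sum0 d (fun i => c * f i) = c * sum0 d f.
Proof. induction d; simpl; [ring| rewrite IHd; ring]. Qed.
Lemma sum0_le d f g : (forall i, (i < d)%nat -> f i <= g i) -> sum0 d f <= sum0 d g.
Proof. induction d; intros h; simpl; [lra|]. apply Rplus_le_compat; [apply IHd; intros; apply h; lia| apply h; lia]. Qed.
Lemma sum0_nonneg d f : (forall i, (i < d)%nat -> 0 <= f i) -> 0 <= sum0 d f.
Proof. induction d; intros h; simpl; [lra|]. apply Rplus_le_le_0_compat; [apply IHd; intros; apply h; lia| apply h; lia]. Qed.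
Lemma sum0_ext d f g : (forall i, (i < d)%nat -> f i = g i) -> sum0 d f = sum0 d g.
Proof. induction d; intros h; simpl; [auto|]. rewrite IHd, h by (auto; lia). auto. Qed.

Lemma ss_sum0 a l d (c : nat -> R) (h : nat -> nat -> R) :
  ss a l (fun k => c k * sum0 d (h k)) = sum0 d (fun i => ss a l (fun k => c k * h k i)).
Proof.
  induction l as [|l IH]; simpl.
  - clear. induction d; simpl; [auto| rewrite <- IHd; ring].
  - rewrite IH. rewrite <- sum0_scal, <- sum0_plus. reflexivity.
Qed.

Lemma max1_le N F M : 0 <= M -> (forall k, (1 <= k <= N)%nat -> F k <= M) -> max1 N F <= M.
Proof.
  induction N as [|N IH]; intros hM h; simpl; [lra|].
  apply Rmax_lub; [apply IH; auto; intros; apply h; lia| apply h; lia].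
Qed.

Lemma Rpower_succ n a : 0 < n -> Rpower n (a + 1) = Rpower n a * n.
Proof. intros hn. rewrite Rpower_plus, Rpower_1 by lra. auto. Qed.

Lemma sw_good n r : 0 < r -> (1 <= n)%nat -> Bgood r (sw n r).
Proof.
  intros hr hn. assert (hn0 : 0 < INR n) by (apply lt_0_INR; lia). split.
  - intros k hk. pose proof (INR_ge1 k hk). unfold sw.
    pose proof (Gamma_pos (INR k + r) ltac:(lra)). pose proof (Gamma_pos (INR k) ltac:(lra)).
    pose proof (Rpower_pos (INR n) r).
    apply Rdiv_lt_0_compat; [lra| apply Rmult_lt_0_compat; lra].
  - intros k hk. pose proof (INR_ge1 k hk). unfold sw. rewrite S_INR.
    replace (INR k + 1 + r) with ((INR k + r) + 1) by ring.
    rewrite !Gamma_succ by lra.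
    pose proof (Gamma_pos (INR k + r) ltac:(lra)). pose proof (Gamma_pos (INR k) ltac:(lra)).
    pose proof (Rpower_pos (INR n) r).
    field. repeat split; lra.
Qed.

Lemma sw_down n r k : 0 < r -> (1 <= n)%nat -> (1 <= k)%nat ->
  sw n (r - 1) k = sw n r k * INR n / (INR k + r - 1).
Proof.
  intros hr hn hk. assert (hn0 : 0 < INR n) by (apply lt_0_INR; lia).
  pose proof (INR_ge1 k hk). unfold sw.
  replace (INR k + r) with ((INR k + (r - 1)) + 1) by ring.
  assert (hp : Rpower (INR n) r = Rpower (INR n) (r - 1) * INR n) by (rewrite <- Rpower_succ by lra; f_equal; ring).
  rewrite Gamma_succ by lra. rewrite hp.
  pose proof (Gamma_pos (INR k + (r - 1)) ltac:(lra)). pose proof (Gamma_pos (INR k) ltac:(lra)).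
  pose proof (Rpower_pos (INR n) (r - 1)).
  field. repeat split; lra.
Qed.

Lemma sw_up n r k : 0 < r -> (1 <= n)%nat -> (1 <= k)%nat ->
  sw n (r + 1) k = sw n r k * (INR k + r) / INR n.
Proof.
  intros hr hn hk. assert (hn0 : 0 < INR n) by (apply lt_0_INR; lia).
  pose proof (INR_ge1 k hk). unfold sw.
  replace (INR k + (r + 1)) with ((INR k + r) + 1) by ring.
  rewrite Gamma_succ by lra. rewrite Rpower_succ by lra.
  pose proof (Gamma_pos (INR k + r) ltac:(lra)). pose proof (Gamma_pos (INR k) ltac:(lra)).
  pose proof (Rpower_pos (INR n) r).
  field. repeat split; lra.
Qed.

From Stdlib Require Import Reals Lra Lia Psatz Arith.
Open Scope R_scope.


Lemma R1 d n r m f : 0 < r -> (1 <= n)%nat ->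
  dnorm2 d n (r - 1) m f = sum0 d (fun i => ss 1 (n - m) (fun k => sw n r k / (INR k + r - 1) * nablapow n m f k i ^ 2)).
Proof.
  intros hr hn. assert (hn0 : 0 < INR n) by (apply lt_0_INR; lia).
  unfold dnorm2, sqnorm. rewrite sum1_ss, <- ss_scal.
  rewrite <- (ss_sum0 1 (n - m) d (fun k => sw n r k / (INR k + r - 1)) (fun k i => nablapow n m f k i ^ 2)).
  apply ss_ext. intros k hk. rewrite sw_down by (auto; lia).
  pose proof (INR_ge1 k ltac:(lia)). field. split; lra.
Qed.

Lemma R2 d n r m f :
  dnorm2 d n r m f = / INR n * sum0 d (fun i => SBn (sw n r) (n - m) (fun k => nablapow n m f k i)).
Proof.
  unfold dnorm2, sqnorm, SBn. rewrite sum1_ss. f_equal.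
  apply (ss_sum0 1 (n - m) d (sw n r) (fun k i => nablapow n m f k i ^ 2)).
Qed.

Lemma R3 d n r m f : 0 < r -> (1 <= n)%nat ->
  dnorm2 d n (r + 1) (S m) f = sum0 d (fun i => Een r (sw n r) (n - m) (fun k => nablapow n m f k i)).
Proof.
  intros hr hn. assert (hn0 : 0 < INR n) by (apply lt_0_INR; lia).
  unfold dnorm2, sqnorm, Een. rewrite sum1_ss, <- ss_scal.
  replace (n - S m)%nat with (n - m - 1)%nat by lia.
  rewrite <- (ss_sum0 1 (n - m - 1) d (fun k => sw n r k * (INR k + r)) (fun k i => (nablapow n m f (S k) i - nablapow n m f k i) ^ 2)).
  apply ss_ext. intros k hk. rewrite sw_up by (auto; lia).
  pose proof (INR_ge1 k ltac:(lia)).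
  assert (e : sum0 d (fun i => nablapow n (S m) f k i ^ 2) =
              INR n ^ 2 * sum0 d (fun i => (nablapow n m f (S k) i - nablapow n m f k i) ^ 2)).
  { rewrite <- sum0_scal. apply sum0_ext. intros i hi. simpl nablapow. unfold nablap. ring. }
  rewrite e. field. lra.
Qed.

Lemma sum0_zero d : sum0 d (fun _ => 0) = 0.
Proof. induction d; simpl; [auto| rewrite IHd; ring]. Qed.

Lemma mul_le_r a b X : 0 <= X -> a <= b -> a * X <= b * X.
Proof. intros; apply Rmult_le_compat_r; auto. Qed.

Definition Kone (r : R) (p m : nat) := 2 ^ S p * (2 * (INR m + 1) + / r).
Definition Qc (r : R) (p m : nat) := 2 * (1 + r) * Kone r p m + 2 * (3 + r) / r.
Definition Cst (r : R) (p m : nat) := Kone r p m + / r + / (r * Rmin 1 r) * Qc r p m.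

Lemma Cst_facts r p m : 0 < r ->
  0 <= Kone r p m /\ 0 <= Qc r p m /\ 0 < / (r * Rmin 1 r) /\ 0 <= Cst r p m.
Proof.
  intros hr.
  assert (hm : 0 < Rmin 1 r) by (apply Rmin_glb_lt; lra).
  assert (h2p : 0 < 2 ^ S p) by (apply pow_lt; lra).
  assert (hir : 0 < / r) by (apply Rinv_0_lt_compat; lra).
  pose proof (pos_INR m) as hmpos.
  assert (hK1 : 0 <= Kone r p m) by (unfold Kone; apply Rmult_le_pos; lra).
  assert (hP1 : 0 < / (r * Rmin 1 r)) by (apply Rinv_0_lt_compat, Rmult_lt_0_compat; lra).
  assert (hQ : 0 <= Qc r p m).
  { unfold Qc. assert (0 <= 2 * (3 + r) / r) by (unfold Rdiv; apply Rmult_le_pos; lra).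
    assert (0 <= 2 * (1 + r) * Kone r p m) by (apply Rmult_le_pos; lra). lra. }
  repeat split; auto.
  unfold Cst. assert (0 <= / (r * Rmin 1 r) * Qc r p m) by (apply Rmult_le_pos; lra). lra.
Qed.

Lemma core r p m d n N B (g : nat -> nat -> R) : 0 < r -> r <= INR p -> Bgood r B -> 0 < INR n ->
  INR n <= (INR m + 1) * INR N -> (1 <= N)%nat ->
  sum0 d (fun i => ss 1 N (fun k => B k / (INR k + r - 1) * g i k ^ 2)) <=
     Cst r p m * (/ INR n * sum0 d (fun i => SBn B N (g i)) + sum0 d (fun i => Een r B N (g i))) /\
  max1 N (fun k => B k * sum0 d (fun i => g i k ^ 2)) <=
     Cst r p m * (/ INR n * sum0 d (fun i => SBn B N (g i)) + sum0 d (fun i => Een r B N (g i))) /\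
  ((forall i, (i < d)%nat -> g i N = 0) ->
    sum0 d (fun i => ss 1 N (fun k => B k / (INR k + r - 1) * g i k ^ 2)) <=
       Cst r p m * sum0 d (fun i => Een r B N (g i)) /\
    max1 N (fun k => B k * sum0 d (fun i => g i k ^ 2)) <= Cst r p m * sum0 d (fun i => Een r B N (g i))).
Proof.
  intros hr hp hB hn0 hNn hN.
  destruct (Cst_facts r p m hr) as [hK1 [hQ [hP1 hC]]].
  assert (h2p : 0 < 2 ^ S p) by (apply pow_lt; lra).
  assert (hir : 0 < / r) by (apply Rinv_0_lt_compat; lra).
  pose proof (pos_INR m) as hmpos.
  unfold Cst. set (K1 := Kone r p m) in *. set (Q := Qc r p m) in *. set (P1 := / (r * Rmin 1 r)) in *.
  pose proof hB as [hBp hBs].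
  set (SB := sum0 d (fun i => SBn B N (g i))).
  set (E := sum0 d (fun i => Een r B N (g i))).
  assert (hSB : 0 <= SB) by (apply sum0_nonneg; intros; apply (SBn_nonneg r); auto).
  assert (hE : 0 <= E) by (apply sum0_nonneg; intros; apply Een_nonneg; auto).
  set (D := / INR n * SB).
  assert (hD : 0 <= D) by (unfold D; apply Rmult_le_pos; [left; apply Rinv_0_lt_compat|]; lra).
  set (X := D + E).
  assert (hX : 0 <= X) by (unfold X; lra).
  assert (hPQ : 0 <= P1 * Q) by (apply Rmult_le_pos; lra).
  assert (hN0 : 0 < INR N) by (apply lt_0_INR; lia).
  assert (hsup : forall k, (1 <= k <= N)%nat -> B k * sum0 d (fun i => g i k ^ 2) <= K1 * X).
  { intros k hk. rewrite <- sum0_scal.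
    eapply Rle_trans.
    { apply (sum0_le d _ (fun i => 2 ^ S p * (2 * SBn B N (g i) / INR N + / r * Een r B N (g i)))).
      intros i hi. apply sup_gen; auto. }
    rewrite sum0_scal, sum0_plus. unfold Rdiv.
    rewrite (sum0_ext d (fun i => 2 * SBn B N (g i) * / INR N) (fun i => (2 * / INR N) * SBn B N (g i))) by (intros; ring).
    rewrite !sum0_scal. fold SB E.
    assert (hSBN : 2 * / INR N * SB <= 2 * (INR m + 1) * D).
    { unfold D. apply (Rmult_le_reg_r (INR N * INR n)); [apply Rmult_lt_0_compat; lra|].
      replace (2 * / INR N * SB * (INR N * INR n)) with (2 * INR n * SB) by (field; lra).
      replace (2 * (INR m + 1) * (/ INR n * SB) * (INR N * INR n)) with (2 * ((INR m + 1) * INR N) * SB) by (field; lra).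
      apply Rmult_le_compat_r; auto. lra. }
    unfold K1, Kone. rewrite (Rmult_assoc (2 ^ S p) (2 * (INR m + 1) + / r) X). apply Rmult_le_compat_l; [lra|].
    unfold X.
    assert (2 * (INR m + 1) * D <= 2 * (INR m + 1) * (D + E)) by (apply Rmult_le_compat_l; lra).
    assert (/ r * E <= / r * (D + E)) by (apply Rmult_le_compat_l; lra).
    lra. }
  assert (hsupBC : (forall i, (i < d)%nat -> g i N = 0) ->
     forall k, (1 <= k <= N)%nat -> B k * sum0 d (fun i => g i k ^ 2) <= / r * E).
  { intros hbc k hk. rewrite <- sum0_scal. unfold E. rewrite <- sum0_scal.
    apply sum0_le. intros i hi. apply sup_BC; auto. }
  assert (habel : sum0 d (fun i => ss 1 N (fun k => B k / (INR k + r - 1) * g i k ^ 2))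
      <= P1 * (2 * (1 + r) * (B N * sum0 d (fun i => g i N ^ 2)) + 2 * (3 + r) / r * E)).
  { eapply Rle_trans.
    { apply (sum0_le d _ (fun i => P1 * Sbeta r B N (g i))). intros i hi. apply SA_bound; auto. }
    rewrite sum0_scal. apply Rmult_le_compat_l; [lra|].
    eapply Rle_trans.
    { apply (sum0_le d _ (fun i => 2 * (1 + r) * (B N * g i N ^ 2) + 2 * (3 + r) / r * Een r B N (g i))).
      intros i hi. apply abel_bound; auto. }
    rewrite sum0_plus, !sum0_scal. fold E. lra. }
  assert (hT : B N * sum0 d (fun i => g i N ^ 2) <= K1 * X) by (apply hsup; lia).
  assert (hinner : 2 * (1 + r) * (B N * sum0 d (fun i => g i N ^ 2)) + 2 * (3 + r) / r * E <= Q * X).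
  { unfold Q, Qc. fold K1. rewrite Rmult_plus_distr_r.
    apply Rplus_le_compat.
    - replace (2 * (1 + r) * K1 * X) with (2 * (1 + r) * (K1 * X)) by ring. apply Rmult_le_compat_l; lra.
    - apply Rmult_le_compat_l; [unfold Rdiv; apply Rmult_le_pos; lra| unfold X; lra]. }
  assert (hfinal1 : sum0 d (fun i => ss 1 N (fun k => B k / (INR k + r - 1) * g i k ^ 2)) <= (K1 + / r + P1 * Q) * X).
  { eapply Rle_trans; [exact habel|].
    eapply Rle_trans; [apply Rmult_le_compat_l; [lra| exact hinner]|].
    rewrite <- Rmult_assoc. apply mul_le_r; auto. lra. }
  assert (hfinal2 : max1 N (fun k => B k * sum0 d (fun i => g i k ^ 2)) <= (K1 + / r + P1 * Q) * X).
  { apply max1_le; [apply Rmult_le_pos; lra|]. intros k hk.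
    eapply Rle_trans; [apply hsup; auto|]. apply mul_le_r; auto. lra. }
  split; [exact hfinal1|]. split; [exact hfinal2|].
  intros hbc.
  assert (hz : sum0 d (fun i => g i N ^ 2) = 0).
  { transitivity (sum0 d (fun _ => 0)).
    - apply sum0_ext. intros i hi. rewrite hbc by auto. ring.
    - apply sum0_zero. }
  split.
  - eapply Rle_trans; [exact habel|]. rewrite hz, Rmult_0_r, Rmult_0_r, Rplus_0_l.
    assert (hq : 2 * (3 + r) / r * E <= Q * E).
    { unfold Q, Qc. fold K1. apply mul_le_r; auto. assert (0 <= 2 * (1 + r) * K1) by (apply Rmult_le_pos; lra). lra. }
    eapply Rle_trans; [apply Rmult_le_compat_l; [lra| exact hq]|].
    rewrite <- Rmult_assoc. apply mul_le_r; auto. lra.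
  - apply max1_le; [apply Rmult_le_pos; lra|]. intros k hk.
    eapply Rle_trans; [apply hsupBC; auto|]. apply mul_le_r; auto. lra.
Qed.

Lemma discrete_part r m : 0 < r -> exists C, 0 <= C /\
    (forall (d n : nat) (f : nat -> vec), (1 <= n)%nat ->
       dnorm2 d n (r - 1) m f <= C * (dnorm2 d n r m f + dnorm2 d n (r + 1) (S m) f) /\
       dsup2 d n r m f <= C * (dnorm2 d n r m f + dnorm2 d n (r + 1) (S m) f) /\
       ((forall i, (i < d)%nat -> nablapow n m f (n - m)%nat i = 0) ->
          dnorm2 d n (r - 1) m f <= C * dnorm2 d n (r + 1) (S m) f /\
          dsup2 d n r m f <= C * dnorm2 d n (r + 1) (S m) f)).
Proof.
  intros hr. destruct (INR_unbounded r) as [p hp].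
  destruct (Cst_facts r p m hr) as [hK1 [hQ [hP1 hC]]].
  exists (Cst r p m). split; auto.
  intros d n f hn.
  assert (hn0 : 0 < INR n) by (apply lt_0_INR; lia).
  pose proof (sw_good n r hr hn) as hB.
  rewrite (R1 d n r m f hr hn), (R2 d n r m f), (R3 d n r m f hr hn).
  unfold dsup2, sqnorm.
  destruct (Nat.eq_dec (n - m) 0) as [hN0|hN1].
  { rewrite hN0. simpl max1.
    assert (e0 : forall h, sum0 d (fun i => ss 1 0 (h i)) = 0).
    { intros h. rewrite <- (sum0_zero d). apply sum0_ext. intros; reflexivity. }
    rewrite e0.
    set (SB := sum0 d (fun i => SBn (sw n r) 0 (fun k => nablapow n m f k i))).
    set (E := sum0 d (fun i => Een r (sw n r) 0 (fun k => nablapow n m f k i))).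
    assert (hSB : 0 <= SB) by (apply sum0_nonneg; intros; apply (SBn_nonneg r); auto).
    assert (hE : 0 <= E) by (apply sum0_nonneg; intros; apply Een_nonneg; auto).
    assert (0 <= / INR n * SB) by (apply Rmult_le_pos; [left; apply Rinv_0_lt_compat|]; lra).
    assert (0 <= Cst r p m * (/ INR n * SB + E)) by (apply Rmult_le_pos; lra).
    assert (0 <= Cst r p m * E) by (apply Rmult_le_pos; lra).
    repeat split; try lra; intros; lra. }
  assert (hNn : INR n <= (INR m + 1) * INR (n - m)).
  { assert (h' : (n <= (m + 1) * (n - m))%nat) by nia. apply le_INR in h'.
    rewrite mult_INR, plus_INR in h'. simpl (INR 1) in h'. lra. }
  pose proof (core r p m d n (n - m) (sw n r) (fun i k => nablapow n m f k i) hr ltac:(lra) hB hn0 hNn ltac:(lia)) as hc.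
  exact hc.
Qed.

From Coquelicot Require Import Coquelicot.
From Stdlib Require Import Reals Lra Lia Psatz ClassicalEpsilon.
Open Scope R_scope.

Definition clamp (s : R) : R := Rmax 0 (Rmin 1 s).
Definition ext0 (g : R -> R) (s : R) : R := g (clamp s).
Definition ext1 (g g' : R -> R) (s : R) : R := g (clamp s) + g' (clamp s) * (s - clamp s).

Lemma clamp_in s : 0 <= clamp s <= 1.
Proof. unfold clamp, Rmax, Rmin. repeat destruct Rle_dec; lra. Qed.
Lemma clamp_id s : 0 <= s <= 1 -> clamp s = s.
Proof. intros h. unfold clamp, Rmax, Rmin. repeat destruct Rle_dec; lra. Qed.
Lemma clamp_lip x y : Rabs (clamp y - clamp x) <= Rabs (y - x).
Proof. unfold clamp, Rmax, Rmin. repeat destruct Rle_dec; unfold Rabs; repeat destruct Rcase_abs; lra. Qed.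

Lemma ext0_id g s : 0 <= s <= 1 -> ext0 g s = g s.
Proof. intros h. unfold ext0. rewrite clamp_id; auto. Qed.
Lemma E1_id g g' s : 0 <= s <= 1 -> ext1 g g' s = g s.
Proof. intros h. unfold ext1. rewrite clamp_id by auto. ring. Qed.

Lemma deriv01_cont g x l : 0 <= x <= 1 -> deriv01 g x l ->
  forall eps, 0 < eps -> exists delta, 0 < delta /\
    forall y, 0 <= y <= 1 -> Rabs (y - x) < delta -> Rabs (g y - g x) < eps.
Proof.
  intros hx hd eps heps.
  destruct (hd 1 ltac:(lra)) as [d [hd0 hdd]].
  set (c := Rabs l + 1).
  assert (hc : 0 < c) by (unfold c; pose proof (Rabs_pos l); lra).
  exists (Rmin d (eps / c)). split.
  { apply Rmin_glb_lt; [lra| apply Rdiv_lt_0_compat; lra]. }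
  intros y hy hyx.
  destruct (Req_dec y x) as [->|ne].
  { rewrite Rminus_diag, Rabs_R0. lra. }
  set (h := y - x).
  assert (hh : h <> 0) by (unfold h; lra).
  assert (hlt : Rabs h < d) by (eapply Rlt_le_trans; [exact hyx| apply Rmin_l]).
  assert (hlt2 : Rabs h < eps / c) by (eapply Rlt_le_trans; [exact hyx| apply Rmin_r]).
  specialize (hdd h hh hlt ltac:(unfold h; lra)).
  replace (x + h) with y in hdd by (unfold h; ring).
  assert (hq : Rabs ((g y - g x) / h) < c).
  { unfold c. pose proof (Rabs_triang ((g y - g x) / h - l) l).
    replace ((g y - g x) / h - l + l) with ((g y - g x) / h) in H by ring. lra. }
  assert (e : g y - g x = (g y - g x) / h * h) by (field; auto).
  rewrite e, Rabs_mult.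
  assert (hp : 0 < Rabs h) by (apply Rabs_pos_lt; auto).
  apply Rle_lt_trans with (c * Rabs h).
  { apply Rmult_le_compat_r; lra. }
  apply (Rmult_lt_reg_r (/ c)); [apply Rinv_0_lt_compat; lra|].
  replace (c * Rabs h * / c) with (Rabs h) by (field; lra). exact hlt2.
Qed.

Lemma cont_pt_of g x : (forall eps, 0 < eps -> exists delta, 0 < delta /\
    forall y, Rabs (y - x) < delta -> Rabs (g y - g x) < eps) -> continuous g x.
Proof.
  intros h. apply continuity_pt_filterlim.
  unfold continuity_pt, continue_in, limit1_in, limit_in. simpl. unfold R_dist.
  intros eps heps. destruct (h eps heps) as [d [hd hdd]]. exists d. split; [lra|].
  intros y [_ hy]. apply hdd. exact hy.
Qed.

Lemma ext0_cont g : (forall x, 0 <= x <= 1 -> forall eps, 0 < eps -> exists delta, 0 < delta /\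
    forall y, 0 <= y <= 1 -> Rabs (y - x) < delta -> Rabs (g y - g x) < eps) ->
  forall x, continuous (ext0 g) x.
Proof.
  intros hg x. apply cont_pt_of. intros eps heps.
  destruct (hg (clamp x) (clamp_in x) eps heps) as [d [hd hdd]].
  exists d. split; auto. intros y hy. unfold ext0.
  apply hdd; [apply clamp_in|]. eapply Rle_lt_trans; [apply clamp_lip| exact hy].
Qed.

Lemma E1_derive g g' x : 0 <= x <= 1 -> deriv01 g x (g' x) -> is_derive (ext1 g g') x (g' x).
Proof.
  intros hx hd. apply is_derive_Reals. intros eps heps.
  destruct (hd eps heps) as [d [hd0 hdd]].
  assert (hA : exists A, 0 < A /\ (0 < x -> A <= x) /\ (x < 1 -> A <= 1 - x)).
  { destruct (Rlt_dec 0 x); destruct (Rlt_dec x 1).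
    - exists (Rmin x (1 - x)). split; [apply Rmin_glb_lt; lra|]. split; intros; [apply Rmin_l| apply Rmin_r].
    - exists x. split; [lra|]. split; intros; lra.
    - exists (1 - x). split; [lra|]. split; intros; lra.
    - lra. }
  destruct hA as [A [hA0 [hA1 hA2]]].
  set (d' := Rmin d A).
  assert (hd' : 0 < d') by (apply Rmin_glb_lt; lra).
  exists (mkposreal d' hd'). intros h hh hlt. simpl in hlt.
  assert (hltd : Rabs h < d) by (eapply Rlt_le_trans; [exact hlt| apply Rmin_l]).
  assert (hltA : Rabs h < A) by (eapply Rlt_le_trans; [exact hlt| apply Rmin_r]).
  rewrite (E1_id g g' x hx).
  destruct (Rle_dec 0 (x + h)) as [h0|h0]; destruct (Rle_dec (x + h) 1) as [h1|h1].
  - rewrite E1_id by lra. apply hdd; auto.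
  -
    assert (ex : x = 1).
    { destruct (Rlt_dec x 1) as [lt|nlt]; [|lra].
      specialize (hA2 lt). unfold Rabs in hltA; destruct Rcase_abs in hltA; lra. }
    subst x. unfold ext1.
    assert (hc : clamp (1 + h) = 1) by (unfold clamp, Rmin, Rmax; repeat destruct Rle_dec; lra).
    rewrite hc. replace ((g 1 + g' 1 * (1 + h - 1) - g 1) / h - g' 1) with 0 by (field; auto).
    rewrite Rabs_R0. lra.
  - assert (ex : x = 0).
    { destruct (Rlt_dec 0 x) as [lt|nlt]; [|lra].
      specialize (hA1 lt). unfold Rabs in hltA; destruct Rcase_abs in hltA; lra. }
    subst x. unfold ext1.
    assert (hc : clamp (0 + h) = 0) by (unfold clamp, Rmin, Rmax; repeat destruct Rle_dec; lra).
    rewrite hc. replace ((g 0 + g' 0 * (0 + h - 0) - g 0) / h - g' 0) with 0 by (field; auto).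
    rewrite Rabs_R0. lra.
  - lra.
Qed.

From Coquelicot Require Import Coquelicot.
From Stdlib Require Import Reals Lra Lia Psatz ClassicalEpsilon.
Open Scope R_scope.

Lemma Rint_eq g a b : ex_RInt g a b -> Rint g a b = RInt g a b.
Proof.
  intros he. unfold Rint.
  destruct (epsilon_spec (inhabits 0) (fun I => exists pr : Riemann_integrable g a b, RiemannInt pr = I)) as [pr hpr].
  { exists (RiemannInt (ex_RInt_Reals_0 g a b he)). exists (ex_RInt_Reals_0 g a b he). auto. }
  rewrite <- hpr. symmetry. apply RInt_Reals.
Qed.

Definition good01 (h : R -> R) := (forall a, 0 < a <= 1 -> ex_RInt h a 1) /\ (forall s, 0 < s <= 1 -> 0 <= h s).

Lemma good01_mono h a b : good01 h -> 0 < a <= b -> b <= 1 -> RInt h b 1 <= RInt h a 1.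
Proof.
  intros [hi hn] hab hb.
  assert (hab' : ex_RInt h a b) by (apply (ex_RInt_Chasles_1 h a b 1); [lra| apply hi; lra]).
  assert (hb1 : ex_RInt h b 1) by (apply hi; lra).
  rewrite <- (RInt_Chasles h a b 1 hab' hb1).
  assert (0 <= RInt h a b) by (apply RInt_ge_0; auto; [lra| intros; apply hn; lra]).
  unfold plus; simpl. lra.
Qed.

Definition Int01_prop (h : R -> R) (I : R) := forall eps, 0 < eps -> exists delta, 0 < delta /\
     forall a, 0 < a < delta -> Rabs (Rint h a 1 - I) < eps.

Lemma Int01_unique h I1 I2 : Int01_prop h I1 -> Int01_prop h I2 -> I1 = I2.
Proof.
  intros h1 h2. destruct (Req_dec I1 I2) as [e|ne]; auto.
  set (eps := Rabs (I1 - I2) / 2).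
  assert (he : 0 < eps) by (unfold eps; apply Rdiv_lt_0_compat; [apply Rabs_pos_lt; lra| lra]).
  destruct (h1 eps he) as [d1 [hd1 k1]]. destruct (h2 eps he) as [d2 [hd2 k2]].
  set (a := Rmin d1 d2 / 2).
  assert (ha : 0 < a) by (unfold a; apply Rdiv_lt_0_compat; [apply Rmin_glb_lt|]; lra).
  assert (ha1 : a < d1) by (unfold a; pose proof (Rmin_l d1 d2); lra).
  assert (ha2 : a < d2) by (unfold a; pose proof (Rmin_r d1 d2); lra).
  specialize (k1 a ltac:(lra)). specialize (k2 a ltac:(lra)).
  pose proof (Rabs_triang (I1 - Rint h a 1) (Rint h a 1 - I2)).
  replace (I1 - Rint h a 1 + (Rint h a 1 - I2)) with (I1 - I2) in H by ring.
  rewrite <- Rabs_Ropp in k1. replace (- (Rint h a 1 - I1)) with (I1 - Rint h a 1) in k1 by ring.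
  unfold eps in *. lra.
Qed.

Lemma Int01_char h M : good01 h -> (forall a, 0 < a <= 1 -> RInt h a 1 <= M) ->
  (forall a, 0 < a <= 1 -> RInt h a 1 <= Int01 h) /\
  (forall M', (forall a, 0 < a <= 1 -> RInt h a 1 <= M') -> Int01 h <= M').
Proof.
  intros hg hM.
  set (E := fun y => exists a, 0 < a <= 1 /\ y = RInt h a 1).
  destruct (completeness E) as [L [hL1 hL2]].
  { exists M. intros y [a [ha ->]]. apply hM; auto. }
  { exists (RInt h 1 1). exists 1. split; [lra| auto]. }
  assert (hp : Int01_prop h L).
  { intros eps heps.
    assert (hex : exists a0, 0 < a0 <= 1 /\ L - eps < RInt h a0 1).
    { apply NNPP. intros hn.
      assert (is_upper_bound E (L - eps)).
      { intros y [a [ha ->]]. apply Rnot_lt_le. intros hlt. apply hn. exists a. split; auto. }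
      specialize (hL2 _ H). lra. }
    destruct hex as [a0 [ha0 hlt]].
    exists a0. split; [lra|]. intros a ha.
    rewrite Rint_eq by (apply (proj1 hg); lra).
    assert (h1 : RInt h a 1 <= L) by (apply hL1; exists a; split; auto; lra).
    assert (h2 : RInt h a0 1 <= RInt h a 1) by (apply good01_mono; auto; lra).
    unfold Rabs. destruct Rcase_abs; lra. }
  assert (hI : Int01 h = L).
  { unfold Int01. apply (Int01_unique h); [|exact hp].
    apply (epsilon_spec (inhabits 0) (fun I => Int01_prop h I)). exists L. exact hp. }
  rewrite hI. split.
  - intros a ha. apply hL1. exists a. auto.
  - intros M' hM'. apply hL2. intros y [a [ha ->]]. apply hM'; auto.
Qed.

Lemma csup_le (phi : R -> R) M : 0 <= M -> (forall s, 0 <= s <= 1 -> phi s <= M) ->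
  epsilon (inhabits 0) (fun M0 => is_lub (fun y => exists s, 0 <= s <= 1 /\ y = phi s) M0) <= M.
Proof.
  intros hM h.
  destruct (completeness (fun y => exists s, 0 <= s <= 1 /\ y = phi s)) as [L hL].
  { exists M. intros y [s [hs ->]]. apply h; auto. }
  { exists (phi 0). exists 0. split; [lra| auto]. }
  pose proof (epsilon_spec (inhabits 0) (fun M0 => is_lub (fun y => exists s, 0 <= s <= 1 /\ y = phi s) M0) (ex_intro _ L hL)) as [_ h2].
  apply h2. intros y [s [hs ->]]. apply h; auto.
Qed.

From Coquelicot Require Import Coquelicot.
From Stdlib Require Import Reals Lra Lia Psatz.
Open Scope R_scope.

Lemma cont_mult (f g : R -> R) (x : R) : continuous f x -> continuous g x -> continuous (fun y => f y * g y) x.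
Proof. intros; apply (@continuous_mult R_UniformSpace R_AbsRing f g x); auto. Qed.
Lemma cont_plus (f g : R -> R) (x : R) : continuous f x -> continuous g x -> continuous (fun y => f y + g y) x.
Proof. intros; apply (@continuous_plus R_UniformSpace R_AbsRing R_NormedModule f g x); auto. Qed.
Lemma cont_const (c x : R) : continuous (fun _ => c) x.
Proof. apply continuous_const. Qed.
Lemma cont_id (x : R) : continuous (fun y => y) x.
Proof. apply continuous_id. Qed.
Lemma cont_sq (f : R -> R) (x : R) : continuous f x -> continuous (fun y => f y ^ 2) x.
Proof. intros h. apply (continuous_ext (fun y => f y * f y) (fun y => f y ^ 2) x); [intros y; change (f y * f y = f y ^ 2); ring| apply cont_mult; auto]. Qed.
Lemma cont_Rpower (a x : R) : 0 < x -> continuous (fun w => Rpower w a) x.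
Proof.
  intros hx. apply (@ex_derive_continuous R_AbsRing R_NormedModule). exists (a * Rpower x (a - 1)).
  apply is_derive_Reals. apply derivable_pt_lim_power; auto.
Qed.

Lemma quad_disc A B C : (forall l, 0 <= l ^ 2 * A - 2 * l * C + B) -> C ^ 2 <= A * B.
Proof.
  intros h.
  assert (hA : 0 <= A).
  { destruct (Rle_dec 0 A); auto.
    exfalso. assert (hB : 0 <= B) by (specialize (h 0); lra).
    (* take l large: l = t with t^2 A - 2 t C + B < 0 *)
    set (t := (Rabs C + B + 1) * 2 / (- A) + 1).
    assert (ht : 1 <= t).
    { unfold t. assert (0 <= (Rabs C + B + 1) * 2 / - A).
      { unfold Rdiv. apply Rmult_le_pos; [pose proof (Rabs_pos C); lra| left; apply Rinv_0_lt_compat; lra]. }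
      lra. }
    specialize (h t).
    assert (e : t * (- A) >= (Rabs C + B + 1) * 2).
    { unfold t. replace (((Rabs C + B + 1) * 2 / - A + 1) * - A) with ((Rabs C + B + 1) * 2 + - A) by (field; lra). lra. }
    assert (hc : - (2 * t * C) <= 2 * t * Rabs C).
    { pose proof (Rle_abs (- C)). rewrite Rabs_Ropp in H. nra. }
    nra. }
  destruct (Req_dec A 0) as [e|ne].
  - subst A. destruct (Req_dec C 0) as [->|nc]; [lra|].
    specialize (h ((B + 1) / (2 * C))).
    replace (((B + 1) / (2 * C)) ^ 2 * 0 - 2 * ((B + 1) / (2 * C)) * C + B) with (-1) in h by (field; auto). lra.
  - specialize (h (C / A)).
    replace ((C / A) ^ 2 * A - 2 * (C / A) * C + B) with (B - C ^ 2 / A) in h by (field; auto).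
    apply (Rmult_le_compat_l A) in h; [|lra].
    replace (A * (B - C ^ 2 / A)) with (A * B - C ^ 2) in h by (field; auto). lra.
Qed.

Lemma is_RInt_lin (f g h : R -> R) a b c1 c2 : ex_RInt f a b -> ex_RInt g a b -> ex_RInt h a b ->
  is_RInt (fun x => c1 * f x + c2 * g x + h x) a b (c1 * RInt f a b + c2 * RInt g a b + RInt h a b).
Proof.
  intros hf hg hh.
  apply (@is_RInt_plus R_NormedModule (fun x => c1 * f x + c2 * g x) h).
  - apply (@is_RInt_plus R_NormedModule (fun x => c1 * f x) (fun x => c2 * g x)).
    + apply (@is_RInt_scal R_NormedModule f a b c1). apply (@RInt_correct R_CompleteNormedModule); auto.
    + apply (@is_RInt_scal R_NormedModule g a b c2). apply (@RInt_correct R_CompleteNormedModule); auto.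
  - apply (@RInt_correct R_CompleteNormedModule); auto.
Qed.

Lemma RInt_lin (f g h : R -> R) a b c1 c2 : ex_RInt f a b -> ex_RInt g a b -> ex_RInt h a b ->
  RInt (fun x => c1 * f x + c2 * g x + h x) a b = c1 * RInt f a b + c2 * RInt g a b + RInt h a b.
Proof. intros. apply is_RInt_unique. apply is_RInt_lin; auto. Qed.

Lemma ex_RInt_lin (f g h : R -> R) a b c1 c2 : ex_RInt f a b -> ex_RInt g a b -> ex_RInt h a b ->
  ex_RInt (fun x => c1 * f x + c2 * g x + h x) a b.
Proof. intros. eexists. apply is_RInt_lin; auto. Qed.

Lemma RInt_CS f g a b : a <= b -> ex_RInt (fun x => f x ^ 2) a b -> ex_RInt (fun x => g x ^ 2) a b ->
  ex_RInt (fun x => f x * g x) a b ->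
  (RInt (fun x => f x * g x) a b) ^ 2 <= RInt (fun x => f x ^ 2) a b * RInt (fun x => g x ^ 2) a b.
Proof.
  intros hab hf hg hfg. apply quad_disc. intros l.
  replace (l ^ 2 * RInt (fun x => f x ^ 2) a b - 2 * l * RInt (fun x => f x * g x) a b + RInt (fun x => g x ^ 2) a b)
    with (l ^ 2 * RInt (fun x => f x ^ 2) a b + - 2 * l * RInt (fun x => f x * g x) a b + RInt (fun x => g x ^ 2) a b) by ring.
  rewrite <- (RInt_lin (fun x => f x ^ 2) (fun x => f x * g x) (fun x => g x ^ 2) a b (l ^ 2) (- 2 * l)) by auto.
  apply RInt_ge_0; auto.
  - apply ex_RInt_lin; auto.
  - intros x _. replace (l ^ 2 * f x ^ 2 + -2 * l * (f x * g x) + g x ^ 2) with ((l * f x - g x) ^ 2) by ring.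
    apply pow2_ge_0.
Qed.

Lemma pow_int r s t : 0 < r -> 0 < s <= t ->
  RInt (fun w => Rpower w (- r - 1)) s t = (Rpower s (- r) - Rpower t (- r)) / r.
Proof.
  intros hr hst. apply is_RInt_unique.
  replace ((Rpower s (- r) - Rpower t (- r)) / r) with (minus ((fun w => - / r * Rpower w (- r)) t) ((fun w => - / r * Rpower w (- r)) s))
    by (unfold minus, plus, opp; simpl; field; lra).
  apply (@is_RInt_derive R_CompleteNormedModule (fun w => - / r * Rpower w (- r)) (fun w => Rpower w (- r - 1))).
  - intros x hx. rewrite Rmin_left, Rmax_right in hx by lra.
    replace (Rpower x (- r - 1)) with (- / r * (- r * Rpower x (- r - 1))) by (field; lra).
    apply is_derive_scal. apply is_derive_Reals. apply derivable_pt_lim_power. lra.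
  - intros x hx. rewrite Rmin_left, Rmax_right in hx by lra. apply cont_Rpower. lra.
Qed.

Lemma RInt_extR (f g : R -> R) a b : (forall x, Rmin a b < x < Rmax a b -> f x = g x) -> RInt f a b = RInt g a b.
Proof. intros h. apply RInt_ext. exact h. Qed.
Lemma ex_RInt_extR (f g : R -> R) a b : (forall x, Rmin a b < x < Rmax a b -> f x = g x) -> ex_RInt f a b -> ex_RInt g a b.
Proof. intros h. apply ex_RInt_ext. exact h. Qed.

Lemma RInt_constR (c a b : R) : RInt (fun _ => c) a b = (b - a) * c.
Proof. rewrite (@RInt_const R_CompleteNormedModule). reflexivity. Qed.
Lemma ex_RInt_constR (c a b : R) : ex_RInt (fun _ => c) a b.
Proof. apply (@ex_RInt_const R_CompleteNormedModule). Qed.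

From Coquelicot Require Import Coquelicot.
From Stdlib Require Import Reals Lra Lia Psatz.
Open Scope R_scope.

Lemma FTC (W V : R -> R) s t : s <= t -> (forall x, s <= x <= t -> is_derive W x (V x)) ->
  (forall x, s <= x <= t -> continuous V x) -> RInt V s t = W t - W s.
Proof.
  intros hst hd hc. apply (@is_RInt_unique R_CompleteNormedModule).
  apply (@is_RInt_derive R_CompleteNormedModule W V).
  - intros x hx. rewrite Rmin_left, Rmax_right in hx by lra. auto.
  - intros x hx. rewrite Rmin_left, Rmax_right in hx by lra. auto.
Qed.

Lemma exRInt_cont (f : R -> R) s t : s <= t -> (forall x, s <= x <= t -> continuous f x) -> ex_RInt f s t.
Proof.
  intros hst hc. apply (@ex_RInt_continuous R_CompleteNormedModule).
  intros z hz. rewrite Rmin_left, Rmax_right in hz by lra. auto.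
Qed.

Lemma S1 (W V : R -> R) r s t : 0 < r -> 0 < s <= t -> (forall x, s <= x <= t -> is_derive W x (V x)) ->
  (forall x, s <= x <= t -> continuous V x) ->
  Rpower s r * (W t - W s) ^ 2 <= / r * RInt (fun w => Rpower w (r + 1) * V w ^ 2) s t.
Proof.
  intros hr hst hd hc.
  rewrite <- (FTC W V s t) by (auto; lra).
  set (f := fun w => Rpower w (- (r + 1) / 2)).
  set (g := fun w => Rpower w ((r + 1) / 2) * V w).
  assert (hcf : forall x, s <= x <= t -> continuous f x) by (intros; apply cont_Rpower; lra).
  assert (hcg : forall x, s <= x <= t -> continuous g x) by (intros; apply cont_mult; [apply cont_Rpower; lra| auto]).
  assert (e1 : RInt V s t = RInt (fun x => f x * g x) s t).
  { apply RInt_extR. intros x hx. rewrite Rmin_left, Rmax_right in hx by lra. unfold f, g.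
    rewrite <- Rmult_assoc, <- Rpower_plus. replace (- (r + 1) / 2 + (r + 1) / 2) with 0 by field.
    rewrite Rpower_O by lra. ring. }
  assert (e2 : RInt (fun x => f x ^ 2) s t = RInt (fun w => Rpower w (- r - 1)) s t).
  { apply RInt_extR. intros x hx. rewrite Rmin_left, Rmax_right in hx by lra. unfold f.
    simpl. rewrite Rmult_1_r, <- Rpower_plus. f_equal. field. }
  assert (e3 : RInt (fun x => g x ^ 2) s t = RInt (fun w => Rpower w (r + 1) * V w ^ 2) s t).
  { apply RInt_extR. intros x hx. rewrite Rmin_left, Rmax_right in hx by lra. unfold g.
    replace ((Rpower x ((r + 1) / 2) * V x) ^ 2) with ((Rpower x ((r + 1) / 2) * Rpower x ((r + 1) / 2)) * V x ^ 2) by ring.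
    rewrite <- Rpower_plus. f_equal. f_equal. field. }
  assert (hcs := RInt_CS f g s t ltac:(lra)
     (exRInt_cont _ s t ltac:(lra) (fun x hx => cont_sq f x (hcf x hx)))
     (exRInt_cont _ s t ltac:(lra) (fun x hx => cont_sq g x (hcg x hx)))
     (exRInt_cont _ s t ltac:(lra) (fun x hx => cont_mult f g x (hcf x hx) (hcg x hx)))).
  rewrite <- e1, e2, e3, pow_int in hcs by lra.
  set (J := RInt (fun w => Rpower w (r + 1) * V w ^ 2) s t) in *.
  assert (hJ : 0 <= J).
  { unfold J. apply RInt_ge_0; [lra| |].
    - apply exRInt_cont; [lra|]. intros; apply cont_mult; [apply cont_Rpower; lra| apply cont_sq; auto].
    - intros x hx. apply Rmult_le_pos; [left; apply Rpower_pos| apply pow2_ge_0]. }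
  assert (hst2 : Rpower s (- r) - Rpower t (- r) <= Rpower s (- r)).
  { unfold Rpower. pose proof (exp_pos (- r * ln t)). lra. }
  assert (hsr : Rpower s r * Rpower s (- r) = 1).
  { rewrite <- Rpower_plus. replace (r + - r) with 0 by ring. apply Rpower_O. lra. }
  assert (hsp : 0 < Rpower s r) by apply Rpower_pos.
  apply Rle_trans with (Rpower s r * ((Rpower s (- r) - Rpower t (- r)) / r * J)).
  { apply Rmult_le_compat_l; lra. }
  apply Rle_trans with (Rpower s r * (Rpower s (- r) / r * J)).
  { apply Rmult_le_compat_l; [lra|]. apply Rmult_le_compat_r; auto. unfold Rdiv.
    apply Rmult_le_compat_r; [left; apply Rinv_0_lt_compat; lra| lra]. }
  right. replace (Rpower s r * (Rpower s (- r) / r * J)) with ((Rpower s r * Rpower s (- r)) * / r * J) by (field; lra).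
  rewrite hsr. ring.
Qed.

From Coquelicot Require Import Coquelicot.
From Stdlib Require Import Reals Lra Lia Psatz.
Open Scope R_scope.

Lemma cont_sum0 d (f : nat -> R -> R) x : (forall i, (i < d)%nat -> continuous (f i) x) ->
  continuous (fun y => sum0 d (fun i => f i y)) x.
Proof.
  induction d as [|d IH]; intros h; simpl.
  - apply cont_const.
  - apply (cont_plus (fun y => sum0 d (fun i => f i y)) (f d)); [apply IH; intros; apply h; lia| apply h; lia].
Qed.

Lemma derive_sum0 d (f df : nat -> R -> R) x : (forall i, (i < d)%nat -> is_derive (f i) x (df i x)) ->
  is_derive (fun y => sum0 d (fun i => f i y)) x (sum0 d (fun i => df i x)).
Proof.
  induction d as [|d IH]; intros h; simpl.
  - apply (@is_derive_const R_AbsRing R_NormedModule).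
  - apply (@is_derive_plus R_AbsRing R_NormedModule (fun y => sum0 d (fun i => f i y)) (f d)); [apply IH; intros; apply h; lia| apply h; lia].
Qed.

Lemma RInt_sum0 d (f : nat -> R -> R) a b : (forall i, (i < d)%nat -> ex_RInt (f i) a b) ->
  ex_RInt (fun x => sum0 d (fun i => f i x)) a b /\
  RInt (fun x => sum0 d (fun i => f i x)) a b = sum0 d (fun i => RInt (f i) a b).
Proof.
  induction d as [|d IH]; intros h; simpl.
  - split; [apply ex_RInt_constR| rewrite RInt_constR; ring].
  - destruct IH as [he hr]; [intros; apply h; lia|].
    assert (hd : ex_RInt (f d) a b) by (apply h; lia).
    split.
    + apply (ex_RInt_extR (fun x => 1 * sum0 d (fun i => f i x) + 1 * f d x + 0)); [intros; ring|].
      apply (ex_RInt_lin (fun x => sum0 d (fun i => f i x)) (f d) (fun _ => 0)); auto. apply ex_RInt_constR.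
    + rewrite (RInt_extR _ (fun x => 1 * sum0 d (fun i => f i x) + 1 * f d x + 0)) by (intros; ring).
      rewrite (RInt_lin (fun x => sum0 d (fun i => f i x)) (f d) (fun _ => 0)) by (auto; apply ex_RInt_constR).
      rewrite hr, RInt_constR. ring.
Qed.

Definition cU (F : nat -> R -> vec) (m i : nat) := ext0 (fun t => F m t i).
Definition cW (F : nat -> R -> vec) (m i : nat) := ext1 (fun t => F m t i) (fun t => F (S m) t i).

Lemma comp_facts d F m i : smooth01 d F -> (i < d)%nat ->
  (forall x, continuous (cU F m i) x) /\ (forall x, continuous (cU F (S m) i) x) /\
  (forall x, 0 <= x <= 1 -> is_derive (cW F m i) x (cU F (S m) i x)) /\
  (forall x, 0 <= x <= 1 -> continuous (cW F m i) x) /\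
  (forall x, 0 <= x <= 1 -> cW F m i x = F m x i /\ cU F m i x = F m x i /\ cU F (S m) i x = F (S m) x i).
Proof.
  intros hs hi.
  assert (hc : forall k x, continuous (cU F k i) x).
  { intros k. unfold cU. apply ext0_cont. intros x hx. apply (deriv01_cont (fun t => F k t i) x (F (S k) x i)); auto. }
  assert (hd : forall x, 0 <= x <= 1 -> is_derive (cW F m i) x (cU F (S m) i x)).
  { intros x hx. unfold cU. rewrite ext0_id by auto. unfold cW. apply E1_derive; auto. }
  split; [exact (hc m)|]. split; [exact (hc (S m))|]. split; [exact hd|]. split.
  - intros x hx. apply (@ex_derive_continuous R_AbsRing R_NormedModule). eexists. apply hd; auto.
  - intros x hx. split; [|split].
    + unfold cW. apply E1_id. auto.
    + unfold cU. apply ext0_id. auto.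
    + unfold cU. apply ext0_id. auto.
Qed.

From Coquelicot Require Import Coquelicot.
From Stdlib Require Import Reals Lra Lia Psatz.
Open Scope R_scope.

Lemma rpow_pos_eq s a : 0 < s -> rpow s a = Rpower s a.
Proof. intros h. unfold rpow. destruct (Rlt_dec 0 s); [auto| lra]. Qed.

Lemma Rpower_le1 s a : 0 < s <= 1 -> 0 <= a -> Rpower s a <= 1.
Proof.
  intros hs ha. apply Rle_trans with (Rpower 1 a).
  - apply Rle_Rpower_l; lra.
  - unfold Rpower. rewrite ln_1, Rmult_0_r, exp_0. lra.
Qed.

Lemma Rpower_1_base a : Rpower 1 a = 1.
Proof. unfold Rpower. rewrite ln_1, Rmult_0_r, exp_0. auto. Qed.

Lemma good_gen (h phi : R -> R) e : (forall x, continuous phi x) -> (forall s, 0 <= phi s) ->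
  (forall s, 0 < s <= 1 -> h s = Rpower s e * phi s) ->
  good01 h /\ (forall a, 0 < a <= 1 -> RInt h a 1 = RInt (fun s => Rpower s e * phi s) a 1) /\
  (forall a b, 0 < a <= b -> ex_RInt (fun s => Rpower s e * phi s) a b).
Proof.
  intros hc hn he.
  assert (hex : forall a b, 0 < a <= b -> ex_RInt (fun s => Rpower s e * phi s) a b).
  { intros a b hab. apply exRInt_cont; [lra|]. intros x hx. apply cont_mult; [apply cont_Rpower; lra| auto]. }
  assert (heq : forall a, 0 < a <= 1 -> RInt h a 1 = RInt (fun s => Rpower s e * phi s) a 1).
  { intros a ha. apply RInt_extR. intros x hx. rewrite Rmin_left, Rmax_right in hx by lra. apply he; lra. }
  split; [split|split]; auto.
  - intros a ha. apply (ex_RInt_extR (fun s => Rpower s e * phi s)).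
    + intros x hx. rewrite Rmin_left, Rmax_right in hx by lra. symmetry. apply he; lra.
    + apply hex; lra.
  - intros s hs. rewrite he by auto. apply Rmult_le_pos; [left; apply Rpower_pos| auto].
Qed.

Lemma cont_bounded (phi : R -> R) : (forall x, continuous phi x) -> exists M, forall s, 0 <= s <= 1 -> phi s <= M.
Proof.
  intros hc. destruct (continuity_ab_maj phi 0 1) as [Mx [h1 h2]]; [lra| |].
  - intros c hc'. apply continuity_pt_filterlim. apply hc.
  - exists (phi Mx). auto.
Qed.

Lemma RInt_bound_by_const (f : R -> R) a b M : a <= b -> ex_RInt f a b -> (forall x, a < x < b -> f x <= M) ->
  RInt f a b <= (b - a) * M.
Proof.
  intros hab he h. rewrite <- RInt_constR. apply RInt_le; auto. apply ex_RInt_constR.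
Qed.

Lemma RInt_sub_le (f : R -> R) a b c : a <= b <= c -> ex_RInt f a c -> (forall x, b < x < c -> 0 <= f x) ->
  RInt f a b <= RInt f a c.
Proof.
  intros habc he hn.
  assert (h1 : ex_RInt f a b) by (apply (ex_RInt_Chasles_1 f a b c); auto).
  assert (h2 : ex_RInt f b c) by (apply (ex_RInt_Chasles_2 f a b c); auto).
  rewrite <- (RInt_Chasles f a b c h1 h2).
  assert (0 <= RInt f b c) by (apply RInt_ge_0; auto; lra).
  change (RInt f a b <= RInt f a b + RInt f b c). lra.
Qed.

From Coquelicot Require Import Coquelicot.
From Stdlib Require Import Reals Lra Lia Psatz.
Open Scope R_scope.

Definition Phi d (F : nat -> R -> vec) m (s : R) := sum0 d (fun i => cU F m i s ^ 2).

Lemma Phi_facts d F m : smooth01 d F ->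
  (forall x, continuous (Phi d F m) x) /\ (forall s, 0 <= Phi d F m s) /\
  (forall s, 0 <= s <= 1 -> sqnorm d (F m s) = Phi d F m s) /\
  (forall s, 0 <= s <= 1 -> sum0 d (fun i => cW F m i s ^ 2) = Phi d F m s).
Proof.
  intros hs. split; [|split; [|split]].
  - intros x. unfold Phi. apply (cont_sum0 d (fun i s => cU F m i s ^ 2)). intros i hi.
    apply cont_sq. apply (comp_facts d F m i hs hi).
  - intros s. unfold Phi. apply sum0_nonneg. intros; apply pow2_ge_0.
  - intros s hs01. unfold sqnorm, Phi. apply sum0_ext. intros i hi.
    destruct (comp_facts d F m i hs hi) as [_ [_ [_ [_ h]]]]. destruct (h s hs01) as [_ [e _]]. rewrite e. auto.
  - intros s hs01. unfold Phi. apply sum0_ext. intros i hi.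
    destruct (comp_facts d F m i hs hi) as [_ [_ [_ [_ h]]]]. destruct (h s hs01) as [e1 [e2 _]]. rewrite e1, e2. auto.
Qed.

Lemma Phi_succ_facts d F m : smooth01 d F ->
  (forall x, continuous (Phi d F (S m)) x) /\ (forall s, 0 <= Phi d F (S m) s) /\
  (forall s, 0 <= s <= 1 -> sqnorm d (F (S m) s) = Phi d F (S m) s).
Proof.
  intros hs. split; [|split].
  - intros x. unfold Phi. apply (cont_sum0 d (fun i s => cU F (S m) i s ^ 2)). intros i hi.
    apply cont_sq. apply (comp_facts d F m i hs hi).
  - intros s. unfold Phi. apply sum0_nonneg. intros; apply pow2_ge_0.
  - intros s hs01. unfold sqnorm, Phi. apply sum0_ext. intros i hi.
    destruct (comp_facts d F m i hs hi) as [_ [_ [_ [_ h]]]]. destruct (h s hs01) as [_ [_ e]]. rewrite e. auto.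
Qed.

Lemma J_facts d F k e : (forall x, continuous (Phi d F k) x) -> (forall s, 0 <= Phi d F k s) ->
  (forall s, 0 <= s <= 1 -> sqnorm d (F k s) = Phi d F k s) -> 0 <= e ->
  0 <= cnorm2 d e k F /\
  (forall a, 0 < a <= 1 -> RInt (fun s => Rpower s e * Phi d F k s) a 1 <= cnorm2 d e k F) /\
  (forall a b, 0 < a <= b -> ex_RInt (fun s => Rpower s e * Phi d F k s) a b).
Proof.
  intros hc hn hq he.
  destruct (good_gen (fun s => rpow s e * sqnorm d (F k s)) (Phi d F k) e hc hn) as [hg [heq hex]].
  { intros s hs. rewrite rpow_pos_eq by lra. rewrite hq by lra. auto. }
  destruct (cont_bounded _ hc) as [M hM].
  assert (hM0 : 0 <= M) by (pose proof (hM 0 ltac:(lra)); pose proof (hn 0); lra).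
  destruct (Int01_char (fun s => rpow s e * sqnorm d (F k s)) M hg) as [h1 h2].
  { intros a ha. rewrite heq by auto.
    apply Rle_trans with ((1 - a) * M).
    - apply RInt_bound_by_const; [lra| apply hex; lra|]. intros x hx.
      pose proof (Rpower_le1 x e ltac:(lra) he). pose proof (hn x). pose proof (hM x ltac:(lra)).
      pose proof (Rpower_pos x e). nra.
    - nra. }
  unfold cnorm2.
  split; [|split; auto].
  - pose proof (h1 1 ltac:(lra)). rewrite RInt_point in H. exact H.
  - intros a ha. rewrite <- heq by auto. apply h1; auto.
Qed.

Lemma S1sum d F m r s t : smooth01 d F -> 0 < r -> 0 < s <= t -> t <= 1 ->
  Rpower s r * sum0 d (fun i => (cW F m i t - cW F m i s) ^ 2) <= / r * cnorm2 d (r + 1) (S m) F.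
Proof.
  intros hs hr hst ht1.
  destruct (Phi_succ_facts d F m hs) as [hc [hn hq]].
  destruct (J_facts d F (S m) (r + 1) hc hn hq ltac:(lra)) as [hJ0 [hJ hex]].
  rewrite <- sum0_scal.
  eapply Rle_trans.
  { apply (sum0_le d _ (fun i => / r * RInt (fun w => Rpower w (r + 1) * cU F (S m) i w ^ 2) s t)).
    intros i hi. destruct (comp_facts d F m i hs hi) as [_ [hcV [hd _]]].
    apply S1; auto. intros x hx. apply hd. lra. }
  rewrite sum0_scal. apply Rmult_le_compat_l; [left; apply Rinv_0_lt_compat; lra|].
  assert (hexi : forall i, (i < d)%nat -> ex_RInt (fun w => Rpower w (r + 1) * cU F (S m) i w ^ 2) s t).
  { intros i hi. destruct (comp_facts d F m i hs hi) as [_ [hcV _]].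
    apply exRInt_cont; [lra|]. intros x hx. apply cont_mult; [apply cont_Rpower; lra| apply cont_sq; auto]. }
  destruct (RInt_sum0 d (fun i w => Rpower w (r + 1) * cU F (S m) i w ^ 2) s t hexi) as [_ he].
  rewrite <- he.
  rewrite (RInt_extR _ (fun w => Rpower w (r + 1) * Phi d F (S m) w)).
  2:{ intros x hx. unfold Phi. rewrite <- sum0_scal. auto. }
  eapply Rle_trans; [apply (RInt_sub_le _ s t 1); [lra| apply hex; lra|]|].
  - intros x hx. apply Rmult_le_pos; [left; apply Rpower_pos| apply hn].
  - apply hJ. lra.
Qed.

Lemma sup_pt d F m r s t : smooth01 d F -> 0 < r -> 0 < s <= 1 -> / 2 <= t <= 1 ->
  Rpower s r * Phi d F m s <= 2 * Rpower 2 r * (Rpower t r * Phi d F m t) + 2 * Rpower 2 r / r * cnorm2 d (r + 1) (S m) F.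
Proof.
  intros hs hr hs1 ht.
  destruct (Phi_facts d F m hs) as [_ [hn [_ hW]]].
  destruct (Phi_succ_facts d F m hs) as [hc' [hn' hq']].
  destruct (J_facts d F (S m) (r + 1) hc' hn' hq' ltac:(lra)) as [hJ0 _].
  set (JC := cnorm2 d (r + 1) (S m) F) in *.
  set (D := sum0 d (fun i => (cW F m i t - cW F m i s) ^ 2)).
  assert (hD : 0 <= D) by (apply sum0_nonneg; intros; apply pow2_ge_0).
  assert (h2r : 1 <= Rpower 2 r).
  { rewrite <- (Rpower_O 2) by lra. apply Rle_Rpower; lra. }
  assert (h2t : 1 <= Rpower 2 r * Rpower t r).
  { rewrite Rpower_mult_distr by lra. rewrite <- (Rpower_1_base r). apply Rle_Rpower_l; lra. }
  assert (hsr : Rpower s r <= 1) by (apply Rpower_le1; lra).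
  assert (hsp : 0 < Rpower s r) by apply Rpower_pos.
  assert (htp : 0 < Rpower t r) by apply Rpower_pos.
  assert (hJr : 0 <= JC / r) by (unfold Rdiv; apply Rmult_le_pos; [lra| left; apply Rinv_0_lt_compat; lra]).
  assert (hphi : Phi d F m s <= 2 * Phi d F m t + 2 * D).
  { rewrite <- (hW s), <- (hW t) by lra. unfold D. rewrite <- !sum0_scal, <- sum0_plus.
    apply sum0_le. intros i hi. pose proof (pow2_ge_0 (cW F m i s - 2 * cW F m i t)).
    replace (2 * cW F m i t ^ 2 + 2 * (cW F m i t - cW F m i s) ^ 2) with (cW F m i s ^ 2 + (cW F m i s - 2 * cW F m i t) ^ 2) by ring.
    lra. }
  assert (hsD : Rpower s r * D <= Rpower 2 r * (JC / r)).
  { destruct (Rle_dec s t) as [hle|hlt].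
    - pose proof (S1sum d F m r s t hs hr ltac:(lra) ltac:(lra)) as h. fold D JC in h.
      unfold Rdiv. rewrite Rmult_comm in h. nra.
    - pose proof (S1sum d F m r t s hs hr ltac:(lra) ltac:(lra)) as h. fold JC in h.
      replace (sum0 d (fun i => (cW F m i s - cW F m i t) ^ 2)) with D in h.
      2:{ unfold D. apply sum0_ext. intros; ring. }
      assert (Rpower s r * D <= Rpower 2 r * Rpower t r * D) by (apply Rmult_le_compat_r; lra).
      assert (Rpower t r * D <= / r * JC) by exact h.
      unfold Rdiv. rewrite (Rmult_comm JC). nra. }
  assert (hsP : Rpower s r * Phi d F m t <= Rpower 2 r * (Rpower t r * Phi d F m t)).
  { pose proof (hn t). rewrite <- Rmult_assoc. apply Rmult_le_compat_r; lra. }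
  assert (Rpower s r * Phi d F m s <= Rpower s r * (2 * Phi d F m t + 2 * D)) by (apply Rmult_le_compat_l; lra).
  replace (2 * Rpower 2 r / r * JC) with (2 * (Rpower 2 r * (JC / r))) by (field; lra).
  lra.
Qed.

Lemma sup_bound d F m r s : smooth01 d F -> 0 < r -> 0 < s <= 1 ->
  Rpower s r * Phi d F m s <= 2 * (2 * Rpower 2 r) * cnorm2 d r m F + 2 * Rpower 2 r / r * cnorm2 d (r + 1) (S m) F.
Proof.
  intros hs hr hs1.
  destruct (Phi_facts d F m hs) as [hc [hn [hq _]]].
  destruct (J_facts d F m r hc hn hq ltac:(lra)) as [hJB0 [hJB hexB]].
  set (JB := cnorm2 d r m F) in *. set (JC := cnorm2 d (r + 1) (S m) F).
  set (K := 2 * Rpower 2 r). set (c0 := Rpower s r * Phi d F m s).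
  set (c1 := 2 * Rpower 2 r / r * JC).
  assert (hint : RInt (fun _ => c0) (/ 2) 1 <=
      RInt (fun t => K * (Rpower t r * Phi d F m t) + c1 * (fun _ => 1) t + (fun _ => 0) t) (/ 2) 1).
  { apply RInt_le; [lra| apply ex_RInt_constR| |].
    - apply ex_RInt_lin; [apply hexB; lra| apply ex_RInt_constR| apply ex_RInt_constR].
    - intros t ht. unfold c0, c1, K. pose proof (sup_pt d F m r s t hs hr hs1 ltac:(lra)). fold JC in H. lra. }
  rewrite RInt_constR in hint.
  rewrite RInt_lin in hint by (try apply ex_RInt_constR; apply hexB; lra).
  rewrite !RInt_constR in hint.
  assert (hB : RInt (fun t => Rpower t r * Phi d F m t) (/ 2) 1 <= JB) by (apply hJB; lra).
  assert (hK : 0 < K) by (unfold K; pose proof (Rpower_pos 2 r); lra).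
  assert (K * RInt (fun t => Rpower t r * Phi d F m t) (/ 2) 1 <= K * JB) by (apply Rmult_le_compat_l; lra).
  assert (c1 = K / r * JC) by (unfold c1, K; field; lra). lra.
Qed.

Lemma sup_bound_BC d F m r s : smooth01 d F -> 0 < r -> 0 < s <= 1 -> (forall i, (i < d)%nat -> F m 1 i = 0) ->
  Rpower s r * Phi d F m s <= / r * cnorm2 d (r + 1) (S m) F.
Proof.
  intros hs hr hs1 hbc.
  destruct (Phi_facts d F m hs) as [hc [hn [hq hW]]].
  pose proof (S1sum d F m r s 1 hs hr ltac:(lra) ltac:(lra)) as h.
  replace (sum0 d (fun i => (cW F m i 1 - cW F m i s) ^ 2)) with (Phi d F m s) in h; auto.
  rewrite <- (hW s) by lra. apply sum0_ext. intros i hi.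
  destruct (comp_facts d F m i hs hi) as [_ [_ [_ [_ h1]]]]. destruct (h1 1 ltac:(lra)) as [e _].
  rewrite e, hbc by auto. ring.
Qed.

Lemma derive_mul (f g : R -> R) x df dg : is_derive f x df -> is_derive g x dg ->
  is_derive (fun y => f y * g y) x (df * g x + f x * dg).
Proof. intros h1 h2. exact (is_derive_mult f g x df dg h1 h2 Rmult_comm). Qed.

Lemma derive_sq (f : R -> R) x df : is_derive f x df -> is_derive (fun y => f y ^ 2) x (2 * df * f x).
Proof.
  intros h. pose proof (is_derive_pow f 2 x df h) as h'.
  replace (INR 2 * df * f x ^ Init.Nat.pred 2) with (2 * df * f x) in h' by (simpl; ring). exact h'.
Qed.

Lemma weighted d F m r a : smooth01 d F -> 0 < r -> 0 < a <= 1 ->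
  RInt (fun s => Rpower s (r - 1) * Phi d F m s) a 1 <= 2 / r * (Phi d F m 1 + 2 / r * cnorm2 d (r + 1) (S m) F).
Proof.
  intros hs hr ha.
  destruct (Phi_facts d F m hs) as [hc [hn [hq hW]]].
  destruct (Phi_succ_facts d F m hs) as [hc' [hn' hq']].
  destruct (J_facts d F (S m) (r + 1) hc' hn' hq' ltac:(lra)) as [hJ0 [hJ hexC]].
  set (JC := cnorm2 d (r + 1) (S m) F) in *.
  set (W := fun i => cW F m i). set (V := fun i => cU F (S m) i).
  set (dH := fun x => r * Rpower x (r - 1) * sum0 d (fun i => W i x ^ 2) + Rpower x r * sum0 d (fun i => 2 * V i x * W i x)).
  set (H := fun x => Rpower x r * sum0 d (fun i => W i x ^ 2)).
  assert (hder : forall x, a <= x <= 1 -> is_derive H x (dH x)).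
  { intros x hx. unfold H, dH.
    apply (derive_mul (fun y => Rpower y r) (fun y => sum0 d (fun i => W i y ^ 2))).
    - apply is_derive_Reals. apply derivable_pt_lim_power. lra.
    - apply (derive_sum0 d (fun i y => W i y ^ 2) (fun i y => 2 * V i y * W i y)).
      intros i hi. apply derive_sq. destruct (comp_facts d F m i hs hi) as [_ [_ [hd _]]]. apply hd. lra. }
  assert (hcont : forall x, a <= x <= 1 -> continuous dH x).
  { intros x hx. unfold dH.
    apply cont_plus; apply cont_mult.
    - apply cont_mult; [apply cont_const| apply cont_Rpower; lra].
    - apply (cont_sum0 d (fun i y => W i y ^ 2)). intros i hi. apply cont_sq.
      destruct (comp_facts d F m i hs hi) as [_ [_ [_ [hcw _]]]]. apply hcw. lra.
    - apply cont_Rpower; lra.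
    - apply (cont_sum0 d (fun i y => 2 * V i y * W i y)). intros i hi.
      destruct (comp_facts d F m i hs hi) as [_ [hcV [_ [hcw _]]]].
      apply cont_mult; [apply cont_mult; [apply cont_const| apply hcV]| apply hcw; lra]. }
  pose proof (FTC H dH a 1 ltac:(lra) hder hcont) as hftc.
  assert (hH1 : H 1 = Phi d F m 1).
  { unfold H. rewrite Rpower_1_base, Rmult_1_l. apply hW. lra. }
  assert (hHa : 0 <= H a).
  { unfold H. apply Rmult_le_pos; [left; apply Rpower_pos| apply sum0_nonneg; intros; apply pow2_ge_0]. }
  assert (hexA : ex_RInt (fun s => Rpower s (r - 1) * Phi d F m s) a 1).
  { apply exRInt_cont; [lra|]. intros x hx. apply cont_mult; [apply cont_Rpower; lra| auto]. }
  assert (hexC' : ex_RInt (fun s => Rpower s (r + 1) * Phi d F (S m) s) a 1) by (apply hexC; lra).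
  assert (hle : RInt (fun x => (r / 2) * (Rpower x (r - 1) * Phi d F m x) + (- (2 / r)) * (Rpower x (r + 1) * Phi d F (S m) x) + (fun _ => 0) x) a 1
      <= RInt dH a 1).
  { apply RInt_le; [lra| apply ex_RInt_lin; auto; apply ex_RInt_constR| |].
    - apply exRInt_cont; [lra|]. auto.
    - intros x hx.
      rewrite <- (hW x) by lra.
      assert (eV : Phi d F (S m) x = sum0 d (fun i => V i x ^ 2)) by (unfold Phi, V; auto).
      rewrite eV. unfold dH.
      set (P := Rpower x (r - 1)).
      assert (hP : 0 < P) by apply Rpower_pos.
      assert (e1 : Rpower x r = P * x).
      { unfold P. replace r with ((r - 1) + 1) at 1 by ring. rewrite Rpower_plus, Rpower_1 by lra. auto. }
      assert (e2 : Rpower x (r + 1) = P * x ^ 2).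
      { unfold P. replace (r + 1) with ((r - 1) + INR 2) by (simpl; ring). rewrite Rpower_plus, Rpower_pow by lra. auto. }
      rewrite e1, e2.
      assert (hsum : 0 <= sum0 d (fun i => r / 2 * W i x ^ 2 + x * (2 * V i x * W i x) + 2 / r * x ^ 2 * V i x ^ 2)).
      { apply sum0_nonneg. intros i hi.
        replace (r / 2 * W i x ^ 2 + x * (2 * V i x * W i x) + 2 / r * x ^ 2 * V i x ^ 2)
          with (r / 2 * (W i x + 2 / r * x * V i x) ^ 2) by (field; lra).
        apply Rmult_le_pos; [lra| apply pow2_ge_0]. }
      rewrite !sum0_plus, !sum0_scal in hsum.
      change (sum0 d (fun i => cW F m i x ^ 2)) with (sum0 d (fun i => W i x ^ 2)).
      assert (hPs := Rmult_le_pos P _ (Rlt_le _ _ hP) hsum).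
      nra. }
  rewrite RInt_lin in hle by (auto; apply ex_RInt_constR).
  rewrite RInt_constR, hftc, hH1 in hle.
  assert (hCa : RInt (fun s => Rpower s (r + 1) * Phi d F (S m) s) a 1 <= JC) by (apply hJ; lra).
  apply (Rmult_le_reg_l (r / 2)); [lra|].
  replace (r / 2 * (2 / r * (Phi d F m 1 + 2 / r * JC))) with (Phi d F m 1 + 2 / r * JC) by (field; lra).
  assert (2 / r * RInt (fun s => Rpower s (r + 1) * Phi d F (S m) s) a 1 <= 2 / r * JC).
  { apply Rmult_le_compat_l; [unfold Rdiv; apply Rmult_le_pos; [lra| left; apply Rinv_0_lt_compat; lra]| auto]. }
  lra.
Qed.

From Coquelicot Require Import Coquelicot.
From Stdlib Require Import Reals Lra Lia Psatz.
Open Scope R_scope.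

Lemma cont_part r m : 0 < r -> exists C, 0 <= C /\
    (forall (d : nat) (F : nat -> R -> vec), smooth01 d F ->
       cnorm2 d (r - 1) m F <= C * (cnorm2 d r m F + cnorm2 d (r + 1) (S m) F) /\
       csup2 d r m F <= C * (cnorm2 d r m F + cnorm2 d (r + 1) (S m) F) /\
       ((forall i, (i < d)%nat -> F m 1 i = 0) ->
          cnorm2 d (r - 1) m F <= C * cnorm2 d (r + 1) (S m) F /\
          csup2 d r m F <= C * cnorm2 d (r + 1) (S m) F)).
Proof.
  intros hr.
  set (K := 2 * Rpower 2 r).
  assert (hK : 0 < K) by (unfold K; pose proof (Rpower_pos 2 r); lra).
  assert (hir : 0 < / r) by (apply Rinv_0_lt_compat; lra).
  set (c1 := 2 * K). set (c2 := K / r). set (c3 := 4 * K / r). set (c4 := 2 * K / r ^ 2 + 4 / r ^ 2). set (c5 := / r).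
  assert (hc2 : 0 <= c2) by (unfold c2, Rdiv; apply Rmult_le_pos; lra).
  assert (hc3 : 0 <= c3) by (unfold c3, Rdiv; apply Rmult_le_pos; lra).
  assert (hc4 : 0 <= c4).
  { unfold c4. assert (0 < r ^ 2) by (apply pow_lt; lra).
    assert (0 < / r ^ 2) by (apply Rinv_0_lt_compat; lra). unfold Rdiv.
    assert (0 <= 2 * K * / r ^ 2) by (apply Rmult_le_pos; lra).
    assert (0 <= 4 * / r ^ 2) by (apply Rmult_le_pos; lra). lra. }
  exists (c1 + c2 + c3 + c4 + c5). split.
  { unfold c1, c5. lra. }
  intros d F hs.
  destruct (Phi_facts d F m hs) as [hc [hn [hq hW]]].
  destruct (Phi_succ_facts d F m hs) as [hc' [hn' hq']].
  destruct (J_facts d F m r hc hn hq ltac:(lra)) as [hJB0 _].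
  destruct (J_facts d F (S m) (r + 1) hc' hn' hq' ltac:(lra)) as [hJC0 _].
  set (JB := cnorm2 d r m F) in *. set (JC := cnorm2 d (r + 1) (S m) F) in *.
  set (SupB := c1 * JB + c2 * JC).
  assert (hsup : forall s, 0 < s <= 1 -> Rpower s r * Phi d F m s <= SupB).
  { intros s hs1. pose proof (sup_bound d F m r s hs hr hs1) as h. fold JB JC in h.
    unfold SupB, c1, c2. fold K in h. replace (2 * Rpower 2 r / r) with (K / r) in h by (unfold K; field; lra). lra. }
  assert (hSupB0 : 0 <= SupB) by (unfold SupB, c1; assert (0 <= c2 * JC) by (apply Rmult_le_pos; lra); nra).
  assert (hPhi1 : Phi d F m 1 <= SupB).
  { pose proof (hsup 1 ltac:(lra)). rewrite Rpower_1_base, Rmult_1_l in H. auto. }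
  destruct (good_gen (fun s => rpow s (r - 1) * sqnorm d (F m s)) (Phi d F m) (r - 1) hc hn) as [hgA [heqA _]].
  { intros s hs1. rewrite rpow_pos_eq by lra. rewrite hq by lra. auto. }
  assert (hLHS : forall M, (forall a, 0 < a <= 1 -> RInt (fun s => Rpower s (r - 1) * Phi d F m s) a 1 <= M) ->
      cnorm2 d (r - 1) m F <= M).
  { intros M hM. unfold cnorm2.
    destruct (Int01_char (fun s => rpow s (r - 1) * sqnorm d (F m s)) M hgA) as [_ h2].
    { intros a ha. rewrite heqA by auto. apply hM; auto. }
    apply h2. intros a ha. rewrite heqA by auto. apply hM; auto. }
  assert (hCS : forall M, 0 <= M -> (forall s, 0 < s <= 1 -> Rpower s r * Phi d F m s <= M) -> csup2 d r m F <= M).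
  { intros M hM0 hM. unfold csup2. apply (csup_le (fun s => rpow s r * sqnorm d (F m s))); auto.
    intros s hs1. destruct (Req_dec s 0) as [->|ne].
    - unfold rpow. destruct (Rlt_dec 0 0); [lra|]. rewrite Rmult_0_l. auto.
    - rewrite rpow_pos_eq by lra. rewrite hq by lra. apply hM. lra. }
  assert (hc2r : 0 <= 2 / r) by (unfold Rdiv; apply Rmult_le_pos; lra).
  split; [|split].
  - apply hLHS. intros a ha. eapply Rle_trans; [apply weighted; auto|]. fold JC.
    apply Rle_trans with (2 / r * (SupB + 2 / r * JC)).
    { apply Rmult_le_compat_l; lra. }
    unfold SupB.
    replace (2 / r * (c1 * JB + c2 * JC + 2 / r * JC)) with (c3 * JB + c4 * JC) by (unfold c1, c2, c3, c4; field; lra).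
    assert (c3 * JB <= (c1 + c2 + c3 + c4 + c5) * JB) by (apply Rmult_le_compat_r; [lra| unfold c1, c5; lra]).
    assert (c4 * JC <= (c1 + c2 + c3 + c4 + c5) * JC) by (apply Rmult_le_compat_r; [lra| unfold c1, c5; lra]).
    lra.
  - apply hCS.
    + apply Rmult_le_pos; [unfold c1, c5; lra| lra].
    + intros s hs1. eapply Rle_trans; [apply hsup; auto|]. unfold SupB.
      assert (c1 * JB <= (c1 + c2 + c3 + c4 + c5) * JB) by (apply Rmult_le_compat_r; [lra| unfold c1, c5; lra]).
      assert (c2 * JC <= (c1 + c2 + c3 + c4 + c5) * JC) by (apply Rmult_le_compat_r; [lra| unfold c1, c5; lra]).
      lra.
  - intros hbc.
    assert (hP1 : Phi d F m 1 = 0).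
    { rewrite <- hq by lra. unfold sqnorm. rewrite <- (sum0_zero d). apply sum0_ext. intros i hi. rewrite hbc by auto. ring. }
    split.
    + apply hLHS. intros a ha. eapply Rle_trans; [apply weighted; auto|]. fold JC. rewrite hP1.
      replace (2 / r * (0 + 2 / r * JC)) with ((4 / r ^ 2) * JC) by (field; lra).
      apply Rmult_le_compat_r; [lra|]. unfold c1, c4, c5.
      assert (0 <= 2 * K / r ^ 2) by (unfold Rdiv; apply Rmult_le_pos; [lra| left; apply Rinv_0_lt_compat, pow_lt; lra]).
      lra.
    + apply hCS.
      * apply Rmult_le_pos; [unfold c1, c5; lra| lra].
      * intros s hs1. eapply Rle_trans; [apply sup_bound_BC; auto|]. fold JC.
        apply Rmult_le_compat_r; [lra|]. unfold c1, c5; lra.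
Qed.

From Coquelicot Require Import Coquelicot.
From Stdlib Require Import Reals Lra Lia Psatz.
Open Scope R_scope.

Lemma mono_C X a b Y : X <= a * Y -> 0 <= Y -> 0 <= b -> X <= (a + b) * Y.
Proof. intros h1 h2 h3. assert (0 <= b * Y) by (apply Rmult_le_pos; auto). lra. Qed.

Lemma dnorm_nonneg_r d n r m f : 0 < r -> (1 <= n)%nat -> 0 <= dnorm2 d n r m f.
Proof.
  intros hr hn. rewrite R2. pose proof (sw_good n r hr hn) as hB.
  assert (hn0 : 0 < INR n) by (apply lt_0_INR; lia).
  apply Rmult_le_pos; [left; apply Rinv_0_lt_compat; lra|].
  apply sum0_nonneg. intros. apply (SBn_nonneg r); auto.
Qed.

Lemma dnorm_nonneg_r1 d n r m f : 0 < r -> (1 <= n)%nat -> 0 <= dnorm2 d n (r + 1) (S m) f.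
Proof.
  intros hr hn. rewrite R3 by auto. pose proof (sw_good n r hr hn) as hB.
  apply sum0_nonneg. intros. apply Een_nonneg; auto.
Qed.

Theorem theorem4p2 (r : R) (m : nat) (hr : 0 < r) :
  exists C : R,
    (* (a) continuous version *)
    (forall (d : nat) (F : nat -> R -> vec), smooth01 d F ->
       cnorm2 d (r - 1) m F <= C * (cnorm2 d r m F + cnorm2 d (r + 1) (S m) F) /\
       csup2 d r m F <= C * (cnorm2 d r m F + cnorm2 d (r + 1) (S m) F) /\
       ((forall i, (i < d)%nat -> F m 1 i = 0) ->
          cnorm2 d (r - 1) m F <= C * cnorm2 d (r + 1) (S m) F /\
          csup2 d r m F <= C * cnorm2 d (r + 1) (S m) F)) /\
    (* (b) discrete version, uniformly in n *)
    (forall (d n : nat) (f : nat -> vec), (1 <= n)%nat ->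
       dnorm2 d n (r - 1) m f <= C * (dnorm2 d n r m f + dnorm2 d n (r + 1) (S m) f) /\
       dsup2 d n r m f <= C * (dnorm2 d n r m f + dnorm2 d n (r + 1) (S m) f) /\
       ((forall i, (i < d)%nat -> nablapow n m f (n - m)%nat i = 0) ->
          dnorm2 d n (r - 1) m f <= C * dnorm2 d n (r + 1) (S m) f /\
          dsup2 d n r m f <= C * dnorm2 d n (r + 1) (S m) f)).
Proof.
  destruct (cont_part r m hr) as [Cc [hCc hc]].
  destruct (discrete_part r m hr) as [Cd [hCd hdp]].
  exists (Cc + Cd). split.
  - intros d F hs. destruct (hc d F hs) as [h1 [h2 h3]].
    destruct (Phi_facts d F m hs) as [hc1 [hn1 [hq1 _]]].
    destruct (Phi_succ_facts d F m hs) as [hc2 [hn2 hq2]].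
    destruct (J_facts d F m r hc1 hn1 hq1 ltac:(lra)) as [hJB0 _].
    destruct (J_facts d F (S m) (r + 1) hc2 hn2 hq2 ltac:(lra)) as [hJC0 _].
    assert (hY : 0 <= cnorm2 d r m F + cnorm2 d (r + 1) (S m) F) by lra.
    split; [apply mono_C; auto|]. split; [apply mono_C; auto|].
    intros hbc. destruct (h3 hbc) as [h4 h5]. split; apply mono_C; auto.
  - intros d n f hn. destruct (hdp d n f hn) as [h1 [h2 h3]].
    pose proof (dnorm_nonneg_r d n r m f hr hn). pose proof (dnorm_nonneg_r1 d n r m f hr hn).
    assert (hY : 0 <= dnorm2 d n r m f + dnorm2 d n (r + 1) (S m) f) by lra.
    rewrite (Rplus_comm Cc Cd).
    split; [apply mono_C; auto; lra|]. split; [apply mono_C; auto; lra|].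
    intros hbc. destruct (h3 hbc) as [h4 h5]. split; apply mono_C; auto; lra.
Qed.
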